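(* Let $K\subset\mathbb{R}^n$ be a proper cone and let $\mathcal{S}=\bigcup_{t}\mathcal{S}_t\subset\pi(K)$ be a $K$-irreducible semigroup generated in one of the three ways (discrete, continuous, or switched with jumps) described in the context. If $\rho(\mathcal{S})=1$, then $\mathcal{S}$ is bounded as a subset of $\mathbb{R}^{n\times n}$.
   Context: A proper cone $K\subset\mathbb{R}^n$ is a nonempty set with $rK\subset K$ for all $r>0$ which is convex, pointed, closed and has nonempty interior. Write $x\ge_K y$ if $x-y\in K$. A face of $K$ is a cone $F\subseteq K$ with: $x\in F$, $x\ge_K y\ge_K0$ imply $y\in F$; $\{0\},K$ are trivial faces. $\pi(K)=\{A: AK\subset K\}$; $A\in\pi(K)$ is $K$-irreducible if no nontrivial face $F$ has $AF\subset F$. Semigroups: (A) discrete: for compact $\mathcal{M}\subset\mathbb{R}^{n\times n}$, $\mathcal{S}_0=\{I\}$, $\mathcal{S}_t=\{A_{t-1}\cdots A_0:A_s\in\mathcal{M}\}$, $t\in\mathbb{N}$. (B) continuous: for compact $\mathcal{M}$, $\mathcal{S}_0=\{I\}$, $\mathcal{S}_t=\{\Phi_\sigma(t)\}$ over measurable $\sigma:[0,t]\to\mathcal{M}$, where $\dot\Phi_\sigma=\sigma\Phi_\sigma$, $\Phi_\sigma(0)=I$. (C) with jumps: for compact $\mathcal{M}\subset\mathbb{R}^{n\times n}\times\mathbb{R}^{n\times n}$ of pairs $(A,\Pi)$ with $\Pi^2=\Pi$, $A\Pi=\Pi A$, and piecewise constant right-continuous $\sigma:\mathbb{R}_+\to\mathcal{M}$,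 $\sigma(s)=(A_{\sigma(s)},\Pi_{\sigma(s)})$, with switching times $0=t_0<t_1<\dots$, $t_k\to\infty$, for $t\in[t_k,t_{k+1})$ set $\Phi_\sigma(t)=e^{A_{\sigma(t_k)}(t-t_k)}\Pi_{\sigma(t_k)}e^{A_{\sigma(t_{k-1})}(t_k-t_{k-1})}\Pi_{\sigma(t_{k-1})}\cdots e^{A_{\sigma(t_0)}(t_1-t_0)}\Pi_{\sigma(t_0)}$, and $\mathcal{S}_t$ is the set of all such $\Phi_\sigma(t)$. In each case $\mathcal{S}=\bigcup_t\mathcal{S}_t$. Joint spectral radius: $\rho(\mathcal{S})=\lim_{t\to\infty}\sup\{\|S\|:S\in\mathcal{S}_t\}^{1/t}$. The semigroup $\mathcal{S}\subset\pi(K)$ is $K$-irreducible if there exists $t>0$ such that $\operatorname{conv}\mathcal{S}_t$ contains a $K$-irreducible element. *)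

(* Defs.v *)
From Stdlib Require Import Reals Lra Lia ClassicalEpsilon.
Open Scope R_scope.

(* Vectors of R^n and matrices of R^{n x n} are represented by functions
   nat -> R and nat -> nat -> R; the "canonical" representatives are those
   vanishing outside the index range [0,n).  All operations below produce
   canonical representatives from arbitrary inputs. *)
Definition Vec := nat -> R.
Definition Mat := nat -> nat -> R.

Definition isVec (n : nat) (x : Vec) : Prop := forall i, (n <= i)%nat -> x i = 0.
Definition isMat (n : nat) (A : Mat) : Prop :=
  forall i j, (n <= i)%nat \/ (n <= j)%nat -> A i j = 0.

Fixpoint fsum (m : nat) (f : nat -> R) : R :=
  match m with O => 0 | S k => fsum k f + f k end.

Definition vzero : Vec := fun _ => 0.
Definition vadd (x y : Vec) : Vec := fun i => x i + y i.
Definition vscale (r : R) (x : Vec) : Vec := fun i => r * x i.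
Definition vopp (x : Vec) : Vec := fun i => - x i.
Definition vsub (x y : Vec) : Vec := fun i => x i - y i.

Definition mid (n : nat) : Mat :=
  fun i j => if andb (Nat.ltb i n) (Nat.eqb i j) then 1 else 0.
Definition mmul (n : nat) (A B : Mat) : Mat :=
  fun i j => if andb (Nat.ltb i n) (Nat.ltb j n)
             then fsum n (fun k => A i k * B k j) else 0.
Definition mvec (n : nat) (A : Mat) (x : Vec) : Vec :=
  fun i => if Nat.ltb i n then fsum n (fun k => A i k * x k) else 0.
Definition mscale (n : nat) (r : R) (A : Mat) : Mat :=
  fun i j => if andb (Nat.ltb i n) (Nat.ltb j n) then r * A i j else 0.
Fixpoint mpow (n : nat) (A : Mat) (k : nat) : Mat :=
  match k with O => mid n | S k' => mmul n A (mpow n A k') end.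

(* entrywise l1 norm on R^{n x n} (all norms are equivalent) *)
Definition mnorm (n : nat) (A : Mat) : R :=
  fsum n (fun i => fsum n (fun j => Rabs (A i j))).

Definition Rlim (u : nat -> R) : R :=
  epsilon (inhabits 0) (fun l => Un_cv u l).

Definition mexp (n : nat) (A : Mat) : Mat :=
  fun i j => Rlim (fun N => fsum (S N) (fun k => / INR (Factorial.fact k) * mpow n A k i j)).

Definition convex_set (C : Vec -> Prop) : Prop :=
  forall x y l, C x -> C y -> 0 <= l <= 1 ->
    C (vadd (vscale l x) (vscale (1 - l) y)).

Definition proper_cone (n : nat) (K : Vec -> Prop) : Prop :=
  (forall x, K x -> isVec n x) /\
  (exists x, K x) /\
  (forall x r, K x -> 0 < r -> K (vscale r x)) /\
  convex_set K /\
  (forall x, K x -> K (vopp x) -> x = vzero) /\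
  (forall (u : nat -> Vec) (x : Vec), (forall k, K (u k)) -> isVec n x ->
     (forall i, (i < n)%nat -> Un_cv (fun k => u k i) (x i)) -> K x) /\
  (exists x eps, K x /\ 0 < eps /\
     forall y, isVec n y -> (forall i, (i < n)%nat -> Rabs (y i - x i) < eps) -> K y).

Definition Kge (K : Vec -> Prop) (x y : Vec) : Prop := K (vsub x y).

Definition face (K F : Vec -> Prop) : Prop :=
  (exists x, F x) /\
  (forall x r, F x -> 0 < r -> F (vscale r x)) /\
  convex_set F /\
  (forall x, F x -> K x) /\
  (forall x y, F x -> Kge K x y -> Kge K y vzero -> F y).

Definition trivial_face (K F : Vec -> Prop) : Prop :=
  (forall x, F x <-> x = vzero) \/ (forall x, F x <-> K x).

Definition in_pi (n : nat) (K : Vec -> Prop) (A : Mat) : Prop :=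
  forall x, K x -> K (mvec n A x).

Definition K_irreducible (n : nat) (K : Vec -> Prop) (A : Mat) : Prop :=
  in_pi n K A /\
  forall F, face K F -> (forall x, F x -> F (mvec n A x)) -> trivial_face K F.

Definition compact_mset (n : nat) (M : Mat -> Prop) : Prop :=
  (forall A, M A -> isMat n A) /\
  (exists C, forall A, M A -> mnorm n A <= C) /\
  (forall (u : nat -> Mat) (L : Mat), (forall k, M (u k)) -> isMat n L ->
     (forall i j, (i < n)%nat -> (j < n)%nat -> Un_cv (fun k => u k i j) (L i j)) ->
     M L).

Definition compact_pairs (n : nat) (M : Mat -> Mat -> Prop) : Prop :=
  (forall A P, M A P -> isMat n A /\ isMat n P) /\
  (exists C, forall A P, M A P -> mnorm n A <= C /\ mnorm n P <= C) /\
  (forall (u v : nat -> Mat) (L1 L2 : Mat), (forall k, M (u k) (v k)) ->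
     isMat n L1 -> isMat n L2 ->
     (forall i j, (i < n)%nat -> (j < n)%nat ->
        Un_cv (fun k => u k i j) (L1 i j) /\ Un_cv (fun k => v k i j) (L2 i j)) ->
     M L1 L2).

Fixpoint disc_S (n : nat) (M : Mat -> Prop) (t : nat) (B : Mat) : Prop :=
  match t with
  | O => B = mid n
  | S t' => exists A C, M A /\ disc_S n M t' C /\ B = mmul n A C
  end.

(* outer_le A r  :<->  Lebesgue outer measure of A is <= r *)
Definition outer_le (A : R -> Prop) (r : R) : Prop :=
  forall eps, 0 < eps -> exists a b : nat -> R,
    (forall k, a k <= b k) /\
    (forall x, A x -> exists k, a k <= x <= b k) /\
    (forall m, fsum m (fun k => b k - a k) <= r + eps).

Definition null_set (N : R -> Prop) : Prop := outer_le N 0.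

Definition leb_measurable (E : R -> Prop) : Prop :=
  forall (A : R -> Prop) r, outer_le A r ->
    exists r1 r2, outer_le (fun x => A x /\ E x) r1 /\
                  outer_le (fun x => A x /\ ~ E x) r2 /\ r1 + r2 <= r.

Definition measurable_on (n : nat) (t : R) (sigma : R -> Mat) : Prop :=
  forall i j c, (i < n)%nat -> (j < n)%nat ->
    leb_measurable (fun s => 0 <= s <= t /\ sigma s i j < c).

Definition abs_cont_on (t : R) (f : R -> R) : Prop :=
  forall eps, 0 < eps -> exists delta, 0 < delta /\
    forall (m : nat) (a b : nat -> R),
      (forall k, (k < m)%nat -> 0 <= a k <= b k /\ b k <= t) ->
      (forall k, (S k < m)%nat -> b k <= a (S k)) ->
      fsum m (fun k => b k - a k) < delta ->
      fsum m (fun k => Rabs (f (b k) - f (a k))) < eps.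

(* Phi is the (Caratheodory) solution of dPhi/ds = sigma Phi, Phi(0) = I on [0,t]:
   absolutely continuous, with derivative sigma(s) Phi(s) at almost every s. *)
Definition cont_S (n : nat) (M : Mat -> Prop) (t : R) (B : Mat) : Prop :=
  exists (sigma Phi : R -> Mat),
    (forall s, 0 <= s <= t -> M (sigma s)) /\
    measurable_on n t sigma /\
    (forall s, isMat n (Phi s)) /\
    Phi 0 = mid n /\
    (forall i j, (i < n)%nat -> (j < n)%nat -> abs_cont_on t (fun s => Phi s i j)) /\
    (exists N, null_set N /\
       forall s, 0 <= s <= t -> ~ N s ->
         forall i j, (i < n)%nat -> (j < n)%nat ->
           derivable_pt_lim (fun u => Phi u i j) s (mmul n (sigma s) (Phi s) i j)) /\
    B = Phi t.

Fixpoint jprod (n : nat) (tk : nat -> R) (Am Pm : nat -> Mat) (k : nat) : Mat :=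
  match k with
  | O => mid n
  | S l => mmul n (mmul n (mexp n (mscale n (tk (S l) - tk l) (Am l))) (Pm l))
                  (jprod n tk Am Pm l)
  end.

Definition jump_S (n : nat) (M : Mat -> Mat -> Prop) (t : R) (B : Mat) : Prop :=
  (t = 0 /\ B = mid n) \/
  (0 < t /\ exists (tk : nat -> R) (Am Pm : nat -> Mat) (k : nat),
     tk O = 0 /\ (forall l, tk l < tk (S l)) /\ (forall T, exists l, T < tk l) /\
     (forall l, M (Am l) (Pm l)) /\
     tk k <= t < tk (S k) /\
     B = mmul n (mmul n (mexp n (mscale n (t - tk k) (Am k))) (Pm k))
                (jprod n tk Am Pm k)).

(* ---------- generated semigroups ----------
   A semigroup is given by its set of times Tm (N or [0,oo)) and the family
   S t (= S_t) for t in Tm. *)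
Definition generated_semigroup (n : nat) (Tm : R -> Prop) (S : R -> Mat -> Prop) : Prop :=
  (exists M, compact_mset n M /\
     (forall t, Tm t <-> exists k : nat, t = INR k) /\
     (forall t B, S t B <-> exists k : nat, t = INR k /\ disc_S n M k B))
  \/
  (exists M, compact_mset n M /\
     (forall t, Tm t <-> 0 <= t) /\
     (forall t B, S t B <-> 0 <= t /\ cont_S n M t B))
  \/
  (exists M, compact_pairs n M /\
     (forall A P, M A P -> mmul n P P = P /\ mmul n A P = mmul n P A) /\
     (forall t, Tm t <-> 0 <= t) /\
     (forall t B, S t B <-> 0 <= t /\ jump_S n M t B)).

(* x^(1/t) for x >= 0 (with 0^(1/t) = 0) *)
Definition rootp (x t : R) : R := if Rle_dec x 0 then 0 else Rpower x (/ t).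

Definition jsr_eq (n : nat) (Tm : R -> Prop) (S : R -> Mat -> Prop) (r : R) : Prop :=
  exists s : R -> R,
    (forall t, Tm t -> is_lub (fun x => exists B, S t B /\ x = mnorm n B) (s t)) /\
    (forall eps, 0 < eps -> exists T, forall t, Tm t -> T <= t ->
       Rabs (rootp (s t) t - r) < eps).

Definition K_irreducible_sg (n : nat) (K : Vec -> Prop) (Tm : R -> Prop)
    (S : R -> Mat -> Prop) : Prop :=
  exists t, Tm t /\ 0 < t /\
    exists (m : nat) (w : nat -> R) (Bs : nat -> Mat),
      (forall k, (k < m)%nat -> 0 <= w k /\ S t (Bs k)) /\
      fsum m w = 1 /\
      K_irreducible n K (fun i j => fsum m (fun k => w k * Bs k i j)).

Definition sg_bounded (n : nat) (Tm : R -> Prop) (S : R -> Mat -> Prop) : Prop :=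
  exists C, forall t B, Tm t -> S t B -> mnorm n B <= C.

(* Main.v *)
Require Import Defs.
From Stdlib Require Import Reals Lra Lia ZArith ClassicalEpsilon Classical FunctionalExtensionality.
Open Scope R_scope.

Lemma fsum_ext m f g : (forall k, (k < m)%nat -> f k = g k) -> fsum m f = fsum m g.
Proof. induction m; simpl; intros H; auto. rewrite IHm by (intros; apply H; lia). rewrite H by lia; auto. Qed.

Lemma fsum_plus m f g : fsum m (fun k => f k + g k) = fsum m f + fsum m g.
Proof. induction m; simpl; [lra|rewrite IHm; lra]. Qed.

Lemma fsum_scal m c f : fsum m (fun k => c * f k) = c * fsum m f.
Proof. induction m; simpl; [lra|rewrite IHm; lra]. Qed.

Lemma fsum_minus m f g : fsum m (fun k => f k - g k) = fsum m f - fsum m g.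
Proof. induction m; simpl; [lra|rewrite IHm; lra]. Qed.

Lemma fsum_zero m : fsum m (fun _ => 0) = 0.
Proof. induction m; simpl; [lra|rewrite IHm; lra]. Qed.

Lemma fsum_le m f g : (forall k, (k<m)%nat -> f k <= g k) -> fsum m f <= fsum m g.
Proof. induction m; simpl; intros H; [lra|]. assert (f m <= g m) by (apply H; lia).
assert (fsum m f <= fsum m g) by (apply IHm; intros; apply H; lia). lra. Qed.

Lemma fsum_nonneg m f : (forall k, (k<m)%nat -> 0 <= f k) -> 0 <= fsum m f.
Proof. intros H. rewrite <- (fsum_zero m). apply fsum_le; auto. Qed.

Lemma fsum_abs m f : Rabs (fsum m f) <= fsum m (fun k => Rabs (f k)).
Proof. induction m; simpl. rewrite Rabs_R0; lra.
eapply Rle_trans. apply Rabs_triang. lra. Qed.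

Lemma fsum_swap m p f : fsum m (fun i => fsum p (fun j => f i j)) = fsum p (fun j => fsum m (fun i => f i j)).
Proof. induction m; simpl. rewrite fsum_zero; auto.
rewrite IHm. rewrite <- fsum_plus. auto. Qed.

Lemma fsum_term m f k : (forall k, (k<m)%nat -> 0 <= f k) -> (k < m)%nat -> f k <= fsum m f.
Proof. induction m; intros H Hk. lia. simpl.
destruct (Nat.eq_dec k m). subst. assert (0 <= fsum m f) by (apply fsum_nonneg; intros; apply H; lia). lra.
assert (f k <= fsum m f) by (apply IHm; [intros; apply H; lia|lia]). assert (0 <= f m) by (apply H; lia). lra. Qed.

Lemma fsum_mono m m' f : (forall k, (k<m')%nat -> 0 <= f k) -> (m <= m')%nat -> fsum m f <= fsum m' f.
Proof. intros H Hm. induction Hm. lra. simpl. assert (0 <= f m0) by (apply H; lia).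
assert (fsum m f <= fsum m0 f) by (apply IHHm; intros; apply H; lia). lra. Qed.

Lemma fsum_delta m i f : fsum m (fun k => if Nat.eqb i k then f k else 0) = if Nat.ltb i m then f i else 0.
Proof. induction m; simpl; auto. rewrite IHm.
destruct (Nat.eqb_spec i m); destruct (Nat.ltb_spec i m); destruct (Nat.ltb_spec i (S m)); try lia; subst; lra. Qed.

Lemma Un_cv_const c : Un_cv (fun _ => c) c.
Proof. intros e He. exists 0%nat. intros. unfold Rdist. rewrite Rminus_diag, Rabs_R0; auto. Qed.

Lemma fsum_cv m (u : nat -> nat -> R) (l : nat -> R) :
  (forall k, (k<m)%nat -> Un_cv (fun j => u j k) (l k)) -> Un_cv (fun j => fsum m (u j)) (fsum m l).
Proof. induction m; intros H; simpl. apply Un_cv_const.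
apply CV_plus. apply IHm; intros; apply H; lia. apply H; lia. Qed.

Lemma Un_cv_ext u v l : (forall k, u k = v k) -> Un_cv u l -> Un_cv v l.
Proof. intros H Hu e He. destruct (Hu e He) as [N HN]. exists N. intros k Hk. rewrite <- H. auto. Qed.

Lemma mmul_isMat n A B : isMat n (mmul n A B).
Proof. intros i j H. unfold mmul. destruct H as [H|H];
 [destruct (Nat.ltb_spec i n)|destruct (Nat.ltb_spec j n)]; try lia; simpl; auto.
 destruct (Nat.ltb i n); auto. Qed.

Lemma mid_isMat n : isMat n (mid n).
Proof. intros i j H. unfold mid. destruct (Nat.ltb_spec i n); simpl; auto.
destruct (Nat.eqb_spec i j); auto. lia. Qed.

Lemma mscale_isMat n r A : isMat n (mscale n r A).
Proof. intros i j H. unfold mscale. destruct H as [H|H];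
 [destruct (Nat.ltb_spec i n)|destruct (Nat.ltb_spec j n)]; try lia; simpl; auto.
 destruct (Nat.ltb i n); auto. Qed.

Lemma mmul_assoc n A B C : mmul n (mmul n A B) C = mmul n A (mmul n B C).
Proof. apply functional_extensionality; intro i; apply functional_extensionality; intro j.
unfold mmul. destruct (Nat.ltb_spec i n); destruct (Nat.ltb_spec j n); simpl; auto.
transitivity (fsum n (fun k => fsum n (fun l => A i l * B l k * C k j))).
apply fsum_ext; intros k Hk. destruct (Nat.ltb_spec k n); try lia. simpl.
rewrite Rmult_comm. rewrite <- fsum_scal. apply fsum_ext; intros; lra.
rewrite fsum_swap. apply fsum_ext; intros l Hl. destruct (Nat.ltb_spec l n); try lia. simpl.
rewrite <- fsum_scal. apply fsum_ext; intros; lra. Qed.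

Lemma mid_l n B : isMat n B -> mmul n (mid n) B = B.
Proof. intros HB. apply functional_extensionality; intro i; apply functional_extensionality; intro j.
unfold mmul, mid. destruct (Nat.ltb_spec i n); destruct (Nat.ltb_spec j n); simpl.
- transitivity (fsum n (fun k => if Nat.eqb i k then B k j else 0)).
  apply fsum_ext; intros. destruct (Nat.eqb i k); lra.
  rewrite fsum_delta. destruct (Nat.ltb_spec i n); try lia. auto.
- rewrite HB; auto.
- rewrite HB; auto.
- rewrite HB; auto. Qed.

Lemma mid_r n A : isMat n A -> mmul n A (mid n) = A.
Proof. intros HA. apply functional_extensionality; intro i; apply functional_extensionality; intro j.
unfold mmul, mid. destruct (Nat.ltb_spec i n); destruct (Nat.ltb_spec j n); simpl.
- transitivity (fsum n (fun k => if Nat.eqb j k then A i k else 0)).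
  apply fsum_ext; intros k Hk. destruct (Nat.ltb_spec k n); try lia. simpl.
  destruct (Nat.eqb_spec k j); destruct (Nat.eqb_spec j k); try lia; subst; lra.
  rewrite fsum_delta. destruct (Nat.ltb_spec j n); try lia. auto.
- rewrite HA; auto.
- rewrite HA; auto.
- rewrite HA; auto. Qed.

Definition nrm1 (n : nat) (x : Vec) : R := fsum n (fun i => Rabs (x i)).

Lemma nrm1_nonneg n x : 0 <= nrm1 n x.
Proof. apply fsum_nonneg; intros; apply Rabs_pos. Qed.

Lemma mnorm_nonneg n A : 0 <= mnorm n A.
Proof. apply fsum_nonneg; intros; apply fsum_nonneg; intros; apply Rabs_pos. Qed.

Lemma nrm1_coord n x i : (i < n)%nat -> Rabs (x i) <= nrm1 n x.
Proof. intros. apply (fsum_term n (fun i => Rabs (x i))); auto. intros; apply Rabs_pos. Qed.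

Lemma mvec_mvec n D B x : mvec n D (mvec n B x) = mvec n (mmul n D B) x.
Proof. apply functional_extensionality; intro i. unfold mvec, mmul.
destruct (Nat.ltb_spec i n); simpl; auto.
transitivity (fsum n (fun k => fsum n (fun l => D i k * B k l * x l))).
apply fsum_ext; intros k Hk. destruct (Nat.ltb_spec k n); try lia.
rewrite <- fsum_scal. apply fsum_ext; intros; lra.
rewrite fsum_swap. apply fsum_ext; intros l Hl. destruct (Nat.ltb_spec l n); try lia. simpl.
rewrite Rmult_comm, <- fsum_scal. apply fsum_ext; intros; lra. Qed.

Lemma mvec_mid n x : isVec n x -> mvec n (mid n) x = x.
Proof. intros Hx. apply functional_extensionality; intro i. unfold mvec, mid.
destruct (Nat.ltb_spec i n); simpl.
transitivity (fsum n (fun k => if Nat.eqb i k then x k else 0)).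
apply fsum_ext; intros. destruct (Nat.eqb i k); lra.
rewrite fsum_delta. destruct (Nat.ltb_spec i n); try lia; auto.
rewrite Hx; auto. Qed.

Lemma mvec_isVec n B x : isVec n (mvec n B x).
Proof. intros i Hi. unfold mvec. destruct (Nat.ltb_spec i n); auto; lia. Qed.

Lemma mvec_add n B x y : mvec n B (vadd x y) = vadd (mvec n B x) (mvec n B y).
Proof. apply functional_extensionality; intro i. unfold mvec, vadd.
destruct (Nat.ltb i n); [|lra]. rewrite <- fsum_plus. apply fsum_ext; intros; lra. Qed.

Lemma mvec_scale n B r x : mvec n B (vscale r x) = vscale r (mvec n B x).
Proof. apply functional_extensionality; intro i. unfold mvec, vscale.
destruct (Nat.ltb i n); [|lra]. rewrite <- fsum_scal. apply fsum_ext; intros; lra. Qed.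

Lemma mvec_sub n B x y : mvec n B (vsub x y) = vsub (mvec n B x) (mvec n B y).
Proof. apply functional_extensionality; intro i. unfold mvec, vsub.
destruct (Nat.ltb i n); [|lra]. rewrite <- fsum_minus. apply fsum_ext; intros; lra. Qed.

Lemma mvec_zero n B : mvec n B vzero = vzero.
Proof. apply functional_extensionality; intro i. unfold mvec, vzero.
destruct (Nat.ltb i n); [|lra]. transitivity (fsum n (fun _ => 0)); [apply fsum_ext; intros; lra|apply fsum_zero]. Qed.

Lemma nrm1_mvec n B x : nrm1 n (mvec n B x) <= mnorm n B * nrm1 n x.
Proof. unfold nrm1, mnorm. rewrite Rmult_comm, <- fsum_scal. apply fsum_le; intros i Hi.
unfold mvec. destruct (Nat.ltb_spec i n); try lia.
eapply Rle_trans. apply fsum_abs. rewrite <- fsum_scal. apply fsum_le; intros k Hk.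
rewrite Rabs_mult. assert (Rabs (x k) <= nrm1 n x) by (apply nrm1_coord; auto).
unfold nrm1 in H0. assert (0 <= Rabs (B i k)) by apply Rabs_pos. nra. Qed.

Lemma Rdiv_le_0_compat a b : 0 <= a -> 0 < b -> 0 <= a / b.
Proof. intros. unfold Rdiv. apply Rmult_le_pos; auto. left; apply Rinv_0_lt_compat; auto. Qed.

Lemma fsum_const m c : fsum m (fun _ => c) = INR m * c.
Proof. induction m; simpl fsum. simpl; lra. rewrite IHm, S_INR. lra. Qed.

Lemma fsum_S m f : fsum (S m) f = fsum m f + f m.
Proof. reflexivity. Qed.

Lemma inv_Sn_small e : 0 < e -> exists N, forall k, (N <= k)%nat -> / (INR k + 1) < e.
Proof. intros He. destruct (archimed (/ e)) as [H1 _].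
exists (Z.to_nat (up (/ e))). intros k Hk.
assert (IZR (up (/ e)) <= INR k).
{ destruct (Z_lt_le_dec (up (/e)) 0). assert (IZR (up (/ e)) < 0) by (apply IZR_lt; auto).
  assert (0 <= INR k) by apply pos_INR. lra.
  rewrite <- (Z2Nat.id (up (/ e))) by lia. rewrite <- INR_IZR_INZ. apply le_INR. auto. }
assert (0 < / e) by (apply Rinv_0_lt_compat; auto).
assert (/ e < INR k + 1) by lra.
apply Rinv_lt_contravar in H2; [|nra]. rewrite Rinv_inv in H2. auto. Qed.

Lemma Un_cv_inv_Sn : Un_cv (fun k => / (INR k + 1)) 0.
Proof. intros e He. destruct (inv_Sn_small e He) as [N HN]. exists N. intros k Hk.
unfold Rdist. rewrite Rminus_0_r. rewrite Rabs_pos_eq. apply HN; lia.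
left. apply Rinv_0_lt_compat. pose proof (pos_INR k); lra. Qed.

Lemma Un_cv_abs u l : Un_cv u l -> Un_cv (fun k => Rabs (u k)) (Rabs l).
Proof. intros H e He. destruct (H e He) as [N HN]. exists N. intros k Hk.
unfold Rdist in *. eapply Rle_lt_trans. apply Rabs_triang_inv2. apply HN; auto. Qed.

Lemma Un_cv_squeeze0 u v : (forall k, 0 <= u k <= v k) -> Un_cv v 0 -> Un_cv u 0.
Proof. intros H Hv e He. destruct (Hv e He) as [N HN]. exists N. intros k Hk.
specialize (HN k Hk). specialize (H k). unfold Rdist in *. rewrite Rminus_0_r in *.
rewrite Rabs_pos_eq in * by lra. lra. Qed.

Definition incr (phi : nat -> nat) : Prop := forall k, (phi k < phi (S k))%nat.

Lemma incr_ge phi : incr phi -> forall k, (k <= phi k)%nat.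
Proof. intros H k; induction k. lia. specialize (H k). lia. Qed.

Lemma incr_mono phi : incr phi -> forall k l, (k <= l)%nat -> (phi k <= phi l)%nat.
Proof. intros H k l Hkl. induction Hkl. lia. specialize (H m). lia. Qed.

Lemma Un_cv_sub u l phi : incr phi -> Un_cv u l -> Un_cv (fun k => u (phi k)) l.
Proof. intros Hp H e He. destruct (H e He) as [N HN]. exists N. intros k Hk. apply HN.
pose proof (incr_ge phi Hp k). lia. Qed.

Lemma BW1 (u : nat -> R) M : (forall k, Rabs (u k) <= M) ->
  exists phi, incr phi /\ exists l, Un_cv (fun k => u (phi k)) l.
Proof. intros HM.
destruct (Bolzano_Weierstrass u (fun c => -M <= c <= M) (compact_P3 (-M) M)) as [l Hl].
{ intros k. specialize (HM k). pose proof (Rle_abs (u k)). pose proof (Rle_abs (- u k)). rewrite Rabs_Ropp in *. lra. }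
assert (Hstep : forall (N : nat) (k : nat), exists p, (N <= p)%nat /\ Rabs (u p - l) < / (INR k + 1)).
{ intros N k. assert (Hpos : 0 < / (INR k + 1)) by (apply Rinv_0_lt_compat; pose proof (pos_INR k); lra).
  destruct (Hl (fun y => Rabs (y - l) < / (INR k + 1)) N) as [p Hp].
  exists (mkposreal _ Hpos). intros y Hy. unfold disc in Hy. simpl in Hy. auto.
  exists p; auto. }
set (nxt := fun N k => proj1_sig (constructive_indefinite_description _ (Hstep N k))).
assert (Hnxt : forall N k, (N <= nxt N k)%nat /\ Rabs (u (nxt N k) - l) < / (INR k + 1)).
{ intros N k. unfold nxt. destruct (constructive_indefinite_description _ (Hstep N k)); auto. }
set (phi := fix f (k : nat) : nat := match k with O => nxt O O | S k' => nxt (S (f k')) k end).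
exists phi. split.
- intros k. simpl. destruct (Hnxt (S (phi k)) (S k)). lia.
- exists l. intros e He. destruct (inv_Sn_small e He) as [N HN]. exists N. intros k Hk.
  unfold Rdist. assert (Rabs (u (phi k) - l) < / (INR k + 1)).
  { destruct k; simpl. apply Hnxt. apply Hnxt. }
  specialize (HN k Hk). lra. Qed.

Lemma BWn n (u : nat -> Vec) M : (forall k i, (i < n)%nat -> Rabs (u k i) <= M) ->
  exists phi, incr phi /\ exists y, isVec n y /\ forall i, (i < n)%nat -> Un_cv (fun k => u (phi k) i) (y i).
Proof. intros HM.
assert (forall m, (m <= n)%nat -> exists phi, incr phi /\ exists y, forall i, (i < m)%nat -> Un_cv (fun k => u (phi k) i) (y i)).
{ induction m; intros Hm.
  - exists (fun k => k). split. intros k; lia. exists (fun _ => 0). intros; lia.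
  - destruct IHm as [phi [Hphi [y Hy]]]. lia.
    destruct (BW1 (fun k => u (phi k) m) M) as [psi [Hpsi [l Hl]]]. intros k; apply HM; lia.
    exists (fun k => phi (psi k)). split. intros k. pose proof (incr_mono phi Hphi (S (psi k)) (psi (S k)) (Hpsi k)). specialize (Hphi (psi k)). lia.
    exists (fun i => if Nat.eqb i m then l else y i). intros i Hi.
    destruct (Nat.eqb_spec i m). subst. auto.
    apply (Un_cv_sub (fun k => u (phi k) i)); auto. apply Hy; lia. }
destruct (H n (le_n n)) as [phi [Hphi [y Hy]]]. exists phi. split; auto.
exists (fun i => if Nat.ltb i n then y i else 0). split.
intros i Hi. destruct (Nat.ltb_spec i n); auto; lia.
intros i Hi. destruct (Nat.ltb_spec i n); try lia. auto. Qed.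

Definition ginf (P : R -> Prop) : R :=
  epsilon (inhabits 0) (fun m => (forall c, P c -> m <= c) /\ (forall e, 0 < e -> exists c, P c /\ c < m + e)).

Lemma ginf_spec P : (exists c, P c) -> (forall c, P c -> 0 <= c) ->
  (forall c, P c -> ginf P <= c) /\ (forall e, 0 < e -> exists c, P c /\ c < ginf P + e).
Proof. intros [c0 Hc0] Hpos. unfold ginf. apply epsilon_spec.
destruct (completeness (fun x => exists c, P c /\ x = - c)) as [m [Hm1 Hm2]].
{ exists 0. intros x [c [Hc ->]]. specialize (Hpos c Hc). lra. }
{ exists (- c0). eauto. }
exists (- m). split.
- intros c Hc. assert (- c <= m) by (apply Hm1; eauto). lra.
- intros e He. apply NNPP. intros Hn.
  assert (forall c, P c -> - m + e <= c).
  { intros c Hc. apply Rnot_lt_le. intros Hlt. apply Hn. eauto. }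
  assert (m <= m - e). { apply Hm2. intros x [c [Hc ->]]. specialize (H c Hc). lra. }
  lra. Qed.

Lemma ginf_le P c : (forall c, P c -> 0 <= c) -> P c -> ginf P <= c.
Proof. intros H Hc. apply (ginf_spec P); eauto. Qed.

Lemma ginf_approx P e : (exists c, P c) -> (forall c, P c -> 0 <= c) -> 0 < e -> exists c, P c /\ c < ginf P + e.
Proof. intros H1 H2 He. apply (ginf_spec P); auto. Qed.

Lemma ginf_nonneg P : (exists c, P c) -> (forall c, P c -> 0 <= c) -> 0 <= ginf P.
Proof. intros H1 H2. apply Rnot_lt_le. intros Hlt.
destruct (ginf_approx P (- ginf P) H1 H2) as [c [Hc Hc2]]. lra. specialize (H2 c Hc). lra. Qed.

Ltac vext := apply functional_extensionality; intro;
  unfold vadd, vsub, vscale, vopp, vzero; cbn [fsum]; try field; try lra.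

Section Cone.
Variables (n : nat) (K : Vec -> Prop).
Hypothesis HK : proper_cone n K.

Lemma K_isVec x : K x -> isVec n x.
Proof. apply HK. Qed.
Lemma K_scale x r : K x -> 0 < r -> K (vscale r x).
Proof. apply HK. Qed.
Lemma K_conv : convex_set K.
Proof. apply HK. Qed.
Lemma K_pointed x : K x -> K (vopp x) -> x = vzero.
Proof. apply HK. Qed.
Lemma K_closed (u : nat -> Vec) x : (forall k, K (u k)) -> isVec n x ->
  (forall i, (i < n)%nat -> Un_cv (fun k => u k i) (x i)) -> K x.
Proof. apply HK. Qed.

Lemma K_zero : K vzero.
Proof. destruct HK as [_ [[x Hx] _]].
apply (K_closed (fun k => vscale (/ (INR k + 1)) x)).
intros k. apply K_scale; auto. apply Rinv_0_lt_compat. pose proof (pos_INR k). lra.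
intros i _. reflexivity.
intros i Hi. unfold vscale, vzero. replace 0 with (0 * x i) by lra.
apply (CV_mult (fun k => / (INR k + 1)) (fun _ => x i)). apply Un_cv_inv_Sn. apply Un_cv_const. Qed.

Lemma K_scale0 x r : K x -> 0 <= r -> K (vscale r x).
Proof. intros Hx [Hr|Hr]. apply K_scale; auto. subst.
replace (vscale 0 x) with vzero. apply K_zero. vext. Qed.

Lemma K_add x y : K x -> K y -> K (vadd x y).
Proof. intros Hx Hy. replace (vadd x y) with (vscale 2 (vadd (vscale (/2) x) (vscale (1 - /2) y))).
apply K_scale; [|lra]. apply K_conv; auto; lra. vext. Qed.

Lemma vsub_zero x : vsub x vzero = x.
Proof. vext. Qed.

Lemma K_ball x0 eps z c : (forall y, isVec n y -> (forall i, (i < n)%nat -> Rabs (y i - x0 i) < eps) -> K y) ->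
  K x0 -> isVec n z -> 0 < c -> nrm1 n z < c * eps -> K (vsub (vscale c x0) z).
Proof. intros Hint Hx0 Hz Hc Hn.
replace (vsub (vscale c x0) z) with (vscale c (vsub x0 (vscale (/ c) z))).
apply K_scale; auto. apply Hint.
intros i Hi. unfold vsub, vscale. rewrite (K_isVec x0 Hx0 i Hi), (Hz i Hi). lra.
intros i Hi. unfold vsub, vscale. replace (x0 i - / c * z i - x0 i) with (- (/ c * z i)) by lra.
rewrite Rabs_Ropp, Rabs_mult, Rabs_pos_eq by (left; apply Rinv_0_lt_compat; auto).
pose proof (nrm1_coord n z i Hi). apply Rmult_lt_reg_l with c; auto.
rewrite <- Rmult_assoc, Rinv_r by lra. lra.
vext. Qed.

End Cone.

Lemma nrm1_scale n r x : nrm1 n (vscale r x) = Rabs r * nrm1 n x.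
Proof. unfold nrm1, vscale. rewrite <- fsum_scal. apply fsum_ext. intros. apply Rabs_mult. Qed.

Lemma nrm1_sub_cv n (u : nat -> Vec) y : (forall i, (i < n)%nat -> Un_cv (fun k => u k i) (y i)) ->
  Un_cv (fun k => nrm1 n (vsub (u k) y)) 0.
Proof. intros H. unfold nrm1. replace 0 with (fsum n (fun _ => 0)) by apply fsum_zero.
apply (fsum_cv n (fun k i => Rabs (vsub (u k) y i)) (fun _ => 0)).
intros i Hi. rewrite <- Rabs_R0. apply Un_cv_abs. unfold vsub.
replace 0 with (y i - y i) by lra. apply CV_minus. auto. apply Un_cv_const. Qed.

Lemma nrm1_cv n (u : nat -> Vec) y : (forall i, (i < n)%nat -> Un_cv (fun k => u k i) (y i)) ->
  Un_cv (fun k => nrm1 n (u k)) (nrm1 n y).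
Proof. intros H. unfold nrm1. apply (fsum_cv n (fun k i => Rabs (u k i))).
intros i Hi. apply Un_cv_abs. auto. Qed.

Lemma nrm1_zero_vec n x : isVec n x -> nrm1 n x = 0 -> x = vzero.
Proof. intros Hx H. apply functional_extensionality. intros i. unfold vzero.
destruct (Nat.lt_ge_cases i n). pose proof (nrm1_coord n x i H0). pose proof (Rabs_pos (x i)).
assert (Rabs (x i) = 0) by lra. destruct (Req_dec (x i) 0); auto. apply Rabs_no_R0 in H4. lra. apply Hx; auto. Qed.

Lemma nrm1_vzero n : nrm1 n vzero = 0.
Proof. unfold nrm1, vzero. rewrite Rabs_R0. apply fsum_zero. Qed.

Lemma nrm1_sub_sym n x y : nrm1 n (vsub x y) = nrm1 n (vsub y x).
Proof. unfold nrm1, vsub. apply fsum_ext; intros. rewrite <- Rabs_Ropp. f_equal; ring. Qed.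

Lemma choice_nat {A : Type} (P : nat -> A -> Prop) : (forall m, exists x, P m x) -> exists f, forall m, P m (f m).
Proof. intros H. exists (fun m => proj1_sig (constructive_indefinite_description _ (H m))).
intros m. destruct (constructive_indefinite_description _ (H m)); auto. Qed.

Section Main.
Variables (n : nat) (K : Vec -> Prop) (Tm : R -> Prop) (Sg : R -> Mat -> Prop).
Hypothesis HK : proper_cone n K.
Hypothesis Tm_nonneg : forall t, Tm t -> 0 <= t.
Hypothesis Tm_unb : forall T, exists t, Tm t /\ T <= t.
Hypothesis SG : forall t s D B, Tm t -> Tm s -> Sg t D -> Sg s B -> Tm (t+s) /\
  exists u : nat -> Mat, (forall m, Sg (t+s) (u m)) /\
    forall i j, (i<n)%nat -> (j<n)%nat -> Un_cv (fun m => u m i j) (mmul n D B i j).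
Hypothesis Hpi : forall t B, Tm t -> Sg t B -> in_pi n K B.
Hypothesis Hjsr : jsr_eq n Tm Sg 1.

Variables (x0 : Vec) (eps : R).
Hypothesis Hx0 : K x0.
Hypothesis Heps : 0 < eps.
Hypothesis Hint : forall y, isVec n y -> (forall i, (i < n)%nat -> Rabs (y i - x0 i) < eps) -> K y.

Let KM_add x y : K x -> K y -> K (vadd x y) := K_add n K HK x y.
Let KM_scale x r : K x -> 0 < r -> K (vscale r x) := K_scale n K HK x r.
Let KM_ball z c : isVec n z -> 0 < c -> nrm1 n z < c * eps -> K (vsub (vscale c x0) z) :=
  K_ball n K HK x0 eps z c Hint Hx0.

Definition Adm (a T1 : R) (x : Vec) (c : R) : Prop :=
  0 <= c /\ forall t B, Tm t -> T1 <= t -> Sg t B -> K (vsub (vscale (c * exp (a * t)) x0) (mvec n B x)).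

Definition Bnd (a T1 : R) : Prop := forall t B, Tm t -> T1 <= t -> Sg t B -> mnorm n B <= exp (a * t).

Definition gg a T1 x := ginf (Adm a T1 x).

Lemma Adm_ex a T1 x : Bnd a T1 -> K x -> exists c, Adm a T1 x c.
Proof. intros Hb Hx. exists (nrm1 n x / eps + 1). split.
pose proof (nrm1_nonneg n x). assert (0 <= nrm1 n x / eps) by (apply Rdiv_le_0_compat; lra). lra.
intros t B Ht HT HS. pose proof (exp_pos (a * t)).
assert (0 <= nrm1 n x / eps) by (apply Rdiv_le_0_compat; [apply nrm1_nonneg|lra]).
apply KM_ball; auto. apply mvec_isVec. nra.
eapply Rle_lt_trans. apply nrm1_mvec. specialize (Hb t B Ht HT HS).
pose proof (nrm1_nonneg n x). pose proof (mnorm_nonneg n B).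
replace ((nrm1 n x / eps + 1) * exp (a * t) * eps) with (exp (a * t) * (nrm1 n x + eps)) by (field; lra).
nra. Qed.

Lemma Adm_nonneg a T1 x c : Adm a T1 x c -> 0 <= c.
Proof. intros [H _]; auto. Qed.

Lemma gg_le a T1 x c : Adm a T1 x c -> gg a T1 x <= c.
Proof. intros H. apply ginf_le; auto. apply Adm_nonneg. Qed.

Lemma gg_approx a T1 x e : Bnd a T1 -> K x -> 0 < e -> exists c, Adm a T1 x c /\ c < gg a T1 x + e.
Proof. intros Hb Hx He. apply ginf_approx; auto. apply Adm_ex; auto. apply Adm_nonneg. Qed.

Lemma gg_nonneg a T1 x : Bnd a T1 -> K x -> 0 <= gg a T1 x.
Proof. intros Hb Hx. apply ginf_nonneg. apply Adm_ex; auto. apply Adm_nonneg. Qed.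

Lemma Adm_mono a T1 x y c : K y -> Kge K x y -> Adm a T1 x c -> Adm a T1 y c.
Proof. intros Hy Hxy [Hc H]. split; auto. intros t B Ht HT HS.
replace (vsub (vscale (c * exp (a * t)) x0) (mvec n B y)) with
  (vadd (vsub (vscale (c * exp (a * t)) x0) (mvec n B x)) (mvec n B (vsub x y))).
apply KM_add; auto. apply (Hpi t B Ht HS). auto.
rewrite mvec_sub. vext. Qed.

Lemma Adm_add a T1 x y c d : Adm a T1 x c -> Adm a T1 y d -> Adm a T1 (vadd x y) (c + d).
Proof. intros [Hc H] [Hd H']. split. lra. intros t B Ht HT HS.
replace (vsub (vscale ((c + d) * exp (a * t)) x0) (mvec n B (vadd x y))) with
  (vadd (vsub (vscale (c * exp (a * t)) x0) (mvec n B x)) (vsub (vscale (d * exp (a * t)) x0) (mvec n B y))).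
apply KM_add; auto. rewrite mvec_add. vext. Qed.

Lemma Adm_scale a T1 x c r : 0 < r -> Adm a T1 x c -> Adm a T1 (vscale r x) (r * c).
Proof. intros Hr [Hc H]. split. nra. intros t B Ht HT HS.
replace (vsub (vscale (r * c * exp (a * t)) x0) (mvec n B (vscale r x))) with
  (vscale r (vsub (vscale (c * exp (a * t)) x0) (mvec n B x))).
apply KM_scale; auto. rewrite mvec_scale. vext. Qed.

Lemma Adm_zero a T1 c : 0 < c -> Adm a T1 vzero c.
Proof. intros Hc. split. lra. intros t B Ht HT HS. rewrite mvec_zero, vsub_zero.
apply KM_scale; auto. pose proof (exp_pos (a * t)). nra. Qed.

Lemma Adm_B a T1 s B x c : Tm s -> Sg s B -> Adm a T1 x c -> Adm a T1 (mvec n B x) (c * exp (a * s)).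
Proof. intros Hs HB [Hc H]. split. pose proof (exp_pos (a * s)); nra.
intros t D Ht HT HD. destruct (SG t s D B Ht Hs HD HB) as [Hts [u [Hu Hcv]]].
pose proof (Tm_nonneg s Hs).
rewrite mvec_mvec. replace (c * exp (a * s) * exp (a * t)) with (c * exp (a * (t + s))).
2:{ rewrite Rmult_plus_distr_l, exp_plus. ring. }
apply (K_closed n K HK (fun m => vsub (vscale (c * exp (a * (t + s))) x0) (mvec n (u m) x))).
- intros m. apply H; auto. lra.
- intros i Hi. unfold vsub, vscale. rewrite (K_isVec n K HK x0 Hx0 i Hi), (mvec_isVec n _ x i Hi). lra.
- intros i Hi. unfold vsub, vscale, mvec. destruct (Nat.ltb_spec i n); try lia.
  apply CV_minus. apply Un_cv_const. apply (fsum_cv n (fun m k => u m i k * x k)).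
  intros k Hk. apply CV_mult. apply Hcv; auto. apply Un_cv_const. Qed.

Lemma gg_gen a T1 x y k0 b : Bnd a T1 -> K x -> 0 <= k0 ->
  (forall c, Adm a T1 x c -> Adm a T1 y (k0 * c + b)) -> gg a T1 y <= k0 * gg a T1 x + b.
Proof. intros Hb Hx Hk H. apply Rnot_lt_le. intros Hlt.
set (e := (gg a T1 y - (k0 * gg a T1 x + b)) / (k0 + 1)).
assert (He : 0 < e) by (unfold e; apply Rdiv_lt_0_compat; lra).
destruct (gg_approx a T1 x e Hb Hx He) as [c [Hc Hc2]].
pose proof (gg_le _ _ _ _ (H c Hc)).
assert (k0 * c <= k0 * (gg a T1 x + e)) by nra.
assert (k0 * e < gg a T1 y - (k0 * gg a T1 x + b)).
{ unfold e. apply Rmult_lt_reg_r with (k0 + 1). lra.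
  replace (k0 * ((gg a T1 y - (k0 * gg a T1 x + b)) / (k0 + 1)) * (k0 + 1)) with
   (k0 * (gg a T1 y - (k0 * gg a T1 x + b))) by (field; lra). nra. }
lra. Qed.

Lemma gg_zero a T1 : Bnd a T1 -> gg a T1 vzero = 0.
Proof. intros Hb. apply Rle_antisym. apply Rnot_lt_le. intros Hlt.
pose proof (gg_le _ _ _ _ (Adm_zero a T1 (gg a T1 vzero / 2) ltac:(lra))). lra.
apply gg_nonneg; auto. apply (K_zero n K HK). Qed.

Lemma gg_scale a T1 x r : Bnd a T1 -> K x -> 0 <= r -> gg a T1 (vscale r x) <= r * gg a T1 x.
Proof. intros Hb Hx [Hr|Hr].
- replace (r * gg a T1 x) with (r * gg a T1 x + 0) by ring. apply gg_gen; auto. lra.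
  intros c Hc. rewrite Rplus_0_r. apply Adm_scale; auto.
- subst. replace (vscale 0 x) with vzero by vext. rewrite gg_zero; auto. lra. Qed.

Lemma gg_B a T1 s B x : Bnd a T1 -> K x -> Tm s -> Sg s B -> gg a T1 (mvec n B x) <= exp (a * s) * gg a T1 x.
Proof. intros Hb Hx Hs HB. replace (exp (a * s) * gg a T1 x) with (exp (a * s) * gg a T1 x + 0) by ring.
apply gg_gen; auto. left; apply exp_pos. intros c Hc. replace (exp (a * s) * c + 0) with (c * exp (a * s)) by ring.
apply Adm_B; auto. Qed.

Lemma gg_mono a T1 x y : Bnd a T1 -> K x -> K y -> Kge K x y -> gg a T1 y <= gg a T1 x.
Proof. intros Hb Hx Hy Hxy. replace (gg a T1 x) with (1 * gg a T1 x + 0) by ring. apply gg_gen; auto. lra.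
intros c Hc. replace (1 * c + 0) with c by ring. apply Adm_mono with x; auto. Qed.

Lemma gg_add a T1 x y : Bnd a T1 -> K x -> K y -> gg a T1 (vadd x y) <= gg a T1 x + gg a T1 y.
Proof. intros Hb Hx Hy. apply Rnot_lt_le. intros Hlt.
set (e := (gg a T1 (vadd x y) - gg a T1 x - gg a T1 y) / 2).
assert (He : 0 < e) by (unfold e; lra).
destruct (gg_approx a T1 x e Hb Hx He) as [c1 [H1 H1']].
destruct (gg_approx a T1 y e Hb Hy He) as [c2 [H2 H2']].
pose proof (gg_le _ _ _ _ (Adm_add _ _ _ _ _ _ H1 H2)). unfold e in *. lra. Qed.

Lemma gg_ub a T1 x d : Bnd a T1 -> K x -> 0 < d -> gg a T1 x <= (nrm1 n x / eps + d) * gg a T1 x0.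
Proof. intros Hb Hx Hd. set (c := nrm1 n x / eps + d).
assert (Hc : 0 < c). { unfold c. pose proof (nrm1_nonneg n x). assert (0 <= nrm1 n x / eps) by (apply Rdiv_le_0_compat; lra). lra. }
eapply Rle_trans. apply (gg_mono a T1 (vscale c x0) x Hb); auto.
unfold Kge. apply KM_ball; auto. apply (K_isVec n K HK x Hx).
unfold c. replace ((nrm1 n x / eps + d) * eps) with (nrm1 n x + d * eps) by (field; lra). nra.
apply gg_scale; auto. lra. Qed.

Definition ej (j : nat) : Vec := fun i => if Nat.eqb i j then 1 else 0.

Lemma mvec_ej D i j : (i < n)%nat -> (j < n)%nat -> mvec n D (ej j) i = D i j.
Proof. intros Hi Hj. unfold mvec, ej. destruct (Nat.ltb_spec i n); try lia.
transitivity (fsum n (fun k => if Nat.eqb j k then D i k else 0)).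
apply fsum_ext; intros k Hk. destruct (Nat.eqb_spec k j); destruct (Nat.eqb_spec j k); try lia; subst; lra.
rewrite fsum_delta. destruct (Nat.ltb_spec j n); try lia; auto. Qed.

Lemma ej_pm j s : (j < n)%nat -> -1 <= s <= 1 -> K (vadd x0 (vscale (s * (eps / 2)) (ej j))).
Proof. intros Hj Hs. apply Hint.
intros i Hi. unfold vadd, vscale, ej. rewrite (K_isVec n K HK x0 Hx0 i Hi). destruct (Nat.eqb_spec i j); try lia. lra.
intros i Hi. unfold vadd, vscale, ej. replace (x0 i + s * (eps / 2) * (if Nat.eqb i j then 1 else 0) - x0 i)
 with (s * (eps / 2) * (if Nat.eqb i j then 1 else 0)) by ring.
destruct (Nat.eqb i j). rewrite Rmult_1_r, Rabs_mult. rewrite (Rabs_pos_eq (eps/2)) by lra.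
assert (Rabs s <= 1) by (apply Rabs_le; lra). nra. rewrite Rmult_0_r, Rabs_R0. lra. Qed.

Lemma kill D : in_pi n K D -> mvec n D x0 = vzero -> forall i j, (i < n)%nat -> (j < n)%nat -> D i j = 0.
Proof. intros HD H0 i j Hi Hj.
pose proof (HD _ (ej_pm j 1 Hj ltac:(lra))) as Hp.
pose proof (HD _ (ej_pm j (-1) Hj ltac:(lra))) as Hm.
rewrite mvec_add, mvec_scale, H0 in Hp, Hm.
assert (E : vadd vzero (vscale (1 * (eps / 2)) (mvec n D (ej j))) = vzero).
{ apply (K_pointed n K HK); auto. replace (vopp (vadd vzero (vscale (1 * (eps / 2)) (mvec n D (ej j)))))
   with (vadd vzero (vscale (-1 * (eps / 2)) (mvec n D (ej j)))) by vext. auto. }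
assert (E2 := f_equal (fun v => v i) E). simpl in E2. unfold vadd, vscale, vzero in E2.
rewrite mvec_ej in E2 by auto. nra. Qed.

Lemma jsr_contra T1 : (forall t D, Tm t -> T1 <= t -> Sg t D -> mnorm n D = 0) -> False.
Proof. intros H. destruct Hjsr as [s [Hs Hl]]. destruct (Hl (/2) ltac:(lra)) as [T HT].
destruct (Tm_unb (Rmax T T1)) as [t [Ht Ht2]].
assert (s t <= 0). { apply (proj2 (Hs t Ht)). intros x [B [HB ->]]. rewrite (H t B Ht); auto. lra.
  pose proof (Rmax_r T T1); lra. }
specialize (HT t Ht ltac:(pose proof (Rmax_l T T1); lra)). unfold rootp in HT.
destruct (Rle_dec (s t) 0); try lra. rewrite Rminus_0_l, Rabs_Ropp, Rabs_R1 in HT. lra. Qed.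

Lemma gg_x0_pos a T1 : Bnd a T1 -> 0 < gg a T1 x0.
Proof. intros Hb. destruct (gg_nonneg a T1 x0 Hb Hx0) as [H|H]; auto. exfalso.
apply (jsr_contra T1). intros t D Ht HT HD.
assert (Hc : forall m, exists c, Adm a T1 x0 c /\ c < / (INR m + 1)).
{ intros m. destruct (gg_approx a T1 x0 (/ (INR m + 1)) Hb Hx0) as [c [Hc1 Hc2]].
  apply Rinv_0_lt_compat. pose proof (pos_INR m); lra. exists c. split; auto. lra. }
destruct (choice_nat _ Hc) as [cs Hcs].
assert (Hz : mvec n D x0 = vzero).
{ apply (K_pointed n K HK). apply (Hpi t D Ht HD); auto.
  apply (K_closed n K HK (fun m => vsub (vscale (cs m * exp (a * t)) x0) (mvec n D x0))).
  - intros m. destruct (Hcs m) as [[_ Hm] _]. apply Hm; auto.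
  - intros i Hi. unfold vopp. rewrite (mvec_isVec n D x0 i Hi). lra.
  - intros i Hi. unfold vsub, vscale, vopp. replace (- mvec n D x0 i) with (0 * exp (a * t) * x0 i - mvec n D x0 i) by ring.
    apply CV_minus; [|apply Un_cv_const]. apply (CV_mult (fun m => cs m * exp (a * t)) (fun _ => x0 i)); [|apply Un_cv_const].
    apply (CV_mult cs (fun _ => exp (a * t))); [|apply Un_cv_const].
    apply (Un_cv_squeeze0 cs (fun m => / (INR m + 1))). intros m. destruct (Hcs m) as [Hm1 Hm2].
    split; [apply (Adm_nonneg _ _ _ _ Hm1)|lra]. apply Un_cv_inv_Sn. }
unfold mnorm. transitivity (fsum n (fun _ => fsum n (fun _ => 0))).
apply fsum_ext; intros i Hi. apply fsum_ext; intros j Hj. rewrite (kill D (Hpi t D Ht HD) Hz i j Hi Hj). apply Rabs_R0.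
rewrite fsum_zero. apply fsum_zero. Qed.

Lemma Bnd_ex a : 0 < a -> exists T1, 1 <= T1 /\ Bnd a T1.
Proof. intros Ha. destruct Hjsr as [s [Hs Hl]].
assert (He : 0 < exp a - 1) by (pose proof (exp_ineq1 a ltac:(lra)); lra).
destruct (Hl _ He) as [T HT]. exists (Rmax T 1). split. apply Rmax_r.
intros t B Ht HT1 HB. pose proof (Rmax_l T 1). pose proof (Rmax_r T 1).
assert (HBs : mnorm n B <= s t) by (apply (proj1 (Hs t Ht)); eauto).
specialize (HT t Ht ltac:(lra)). unfold rootp in HT.
destruct (Rle_dec (s t) 0). pose proof (exp_pos (a * t)). lra.
apply Rabs_def2 in HT. destruct HT as [HT _]. unfold Rpower in HT.
assert (/ t * ln (s t) < a) by (apply exp_lt_inv; lra).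
assert (ln (s t) < a * t). { apply Rmult_lt_reg_l with (/ t). apply Rinv_0_lt_compat; lra.
  replace (/ t * (a * t)) with a by (field; lra). auto. }
apply exp_increasing in H2. rewrite exp_ln in H2 by lra. lra. Qed.

Variables (T0 : R) (m0 : nat) (w : nat -> R) (Bs : nat -> Mat).
Hypothesis HT0 : Tm T0.
Hypothesis Hw : forall k, (k < m0)%nat -> 0 <= w k /\ Sg T0 (Bs k).
Hypothesis Hw1 : fsum m0 w = 1.
Hypothesis HA : K_irreducible n K (fun i j => fsum m0 (fun k => w k * Bs k i j)).

Definition AA : Mat := fun i j => fsum m0 (fun k => w k * Bs k i j).

Lemma ggA a T1 x : Bnd a T1 -> K x -> gg a T1 (mvec n AA x) <= exp (a * T0) * gg a T1 x.
Proof. intros Hb Hx.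
set (vp := fun m' => fun i => fsum m' (fun k => w k * mvec n (Bs k) x i)).
assert (Hvp : forall m', (m' <= m0)%nat -> K (vp m') /\ gg a T1 (vp m') <= fsum m' w * (exp (a * T0) * gg a T1 x)).
{ induction m'; intros Hm'.
  - replace (vp 0%nat) with vzero by (unfold vp; apply functional_extensionality; intro; unfold vzero; simpl; lra). split. apply (K_zero n K HK). rewrite gg_zero; auto. simpl; lra.
  - destruct IHm' as [IH1 IH2]; [lia|]. destruct (Hw m' ltac:(lia)) as [Hwm HBm].
    assert (E : vp (Datatypes.S m') = vadd (vp m') (vscale (w m') (mvec n (Bs m') x))) by (unfold vp; vext).
    assert (KB : K (mvec n (Bs m') x)) by (apply (Hpi T0 (Bs m') HT0 HBm); auto).
    rewrite E. split. apply KM_add; auto. apply (K_scale0 n K HK); auto.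
    eapply Rle_trans. apply gg_add; auto. apply (K_scale0 n K HK); auto.
    pose proof (gg_scale a T1 (mvec n (Bs m') x) (w m') Hb KB Hwm).
    pose proof (gg_B a T1 T0 (Bs m') x Hb Hx HT0 HBm).
    simpl fsum. nra. }
replace (mvec n AA x) with (vp m0). destruct (Hvp m0 (le_n _)) as [_ H]. rewrite Hw1 in H. lra.
apply functional_extensionality; intros i. symmetry. unfold vp, mvec, AA. destruct (Nat.ltb i n).
- transitivity (fsum n (fun l => fsum m0 (fun k => w k * Bs k i l * x l))).
  apply fsum_ext; intros. rewrite Rmult_comm, <- fsum_scal; apply fsum_ext; intros; ring.
  rewrite fsum_swap. apply fsum_ext; intros. rewrite <- fsum_scal; apply fsum_ext; intros; ring.
- symmetry. transitivity (fsum m0 (fun _ => 0)). apply fsum_ext; intros; ring. apply fsum_zero. Qed.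

Lemma claim : exists c a0, 0 < c /\ 0 < a0 /\ forall a T1, 0 < a < a0 -> Bnd a T1 ->
  forall y, K y -> nrm1 n y = 1 -> c * gg a T1 x0 <= gg a T1 y.
Proof. apply NNPP. intros Hn.
assert (Hj : forall j : nat, exists p : R * R * Vec, 0 < fst (fst p) < / (INR j + 1) /\ Bnd (fst (fst p)) (snd (fst p))
   /\ K (snd p) /\ nrm1 n (snd p) = 1 /\ gg (fst (fst p)) (snd (fst p)) (snd p) < / (INR j + 1) * gg (fst (fst p)) (snd (fst p)) x0).
{ intros j. apply NNPP. intros Hj. apply Hn. assert (Hp : 0 < / (INR j + 1)) by (apply Rinv_0_lt_compat; pose proof (pos_INR j); lra).
  exists (/ (INR j + 1)), (/ (INR j + 1)). split; auto. split; auto. intros a T1 Ha Hb y Hy Hny.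
  apply Rnot_lt_le. intros Hlt. apply Hj. exists (a, T1, y). simpl. auto. }
destruct (choice_nat _ Hj) as [f Hf].
set (aa := fun j => fst (fst (f j))). set (TT := fun j => snd (fst (f j))). set (yy := fun j => snd (f j)).
destruct (BWn n yy 1) as [phi [Hphi [y [Hyv Hycv]]]].
{ intros k i Hi. destruct (Hf k) as [_ [_ [_ [Hn1 _]]]]. rewrite <- Hn1. apply nrm1_coord; auto. }
assert (Hb : forall k, Bnd (aa (phi k)) (TT (phi k))) by (intros k; apply (Hf (phi k))).
assert (Ha : forall k, 0 < aa (phi k) < 1).
{ intros k. destruct (Hf (phi k)) as [H _]. fold (aa (phi k)) in H. split. lra.
  assert (/ (INR (phi k) + 1) <= 1). { rewrite <- Rinv_1. apply Rinv_le_contravar. lra. pose proof (pos_INR (phi k)); lra. } lra. }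
assert (Hyk : forall k, K (yy k)) by (intros k; apply (Hf k)).
assert (Hgy : forall k, gg (aa (phi k)) (TT (phi k)) (yy (phi k)) < / (INR (phi k) + 1) * gg (aa (phi k)) (TT (phi k)) x0)
  by (intros k; apply (Hf (phi k))).
assert (Hpos : forall k, 0 < gg (aa (phi k)) (TT (phi k)) x0) by (intros k; apply gg_x0_pos; auto).
assert (HKy : K y) by (apply (K_closed n K HK (fun k => yy (phi k))); auto).
assert (Hny : nrm1 n y = 1).
{ apply (UL_sequence (fun k => nrm1 n (yy (phi k)))). apply nrm1_cv; auto.
  apply (Un_cv_ext (fun _ => 1)). intros k. symmetry. apply (Hf (phi k)). apply Un_cv_const. }
set (G := fun k x => gg (aa (phi k)) (TT (phi k)) x) in *.
set (Z := fun x => K x /\ forall e, 0 < e -> exists J, forall k, (J <= k)%nat -> G k x < e * G k x0).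
destruct HA as [HApi HAirr].
assert (HZface : face K Z).
{ split; [|split; [|split; [|split]]].
  - exists vzero. split. apply (K_zero n K HK). intros e He. exists 0%nat. intros k _. unfold G. rewrite gg_zero; auto.
    specialize (Hpos k). nra.
  - intros x r [Hx HZ] Hr. split. apply KM_scale; auto. intros e He. destruct (HZ (e / r)) as [J HJ].
    apply Rdiv_lt_0_compat; auto. exists J. intros k Hk. specialize (HJ k Hk).
    unfold G in *. eapply Rle_lt_trans. apply gg_scale; auto. lra.
    replace (e * gg (aa (phi k)) (TT (phi k)) x0) with (r * (e / r * gg (aa (phi k)) (TT (phi k)) x0)) by (field; lra).
    apply Rmult_lt_compat_l; auto.
  - intros x z l [Hx HZx] [Hz HZz] Hl. split. apply (K_conv n K HK); auto. intros e He.
    destruct (HZx (e / 2)) as [J1 HJ1]. lra. destruct (HZz (e / 2)) as [J2 HJ2]. lra.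
    exists (max J1 J2). intros k Hk. specialize (HJ1 k ltac:(lia)). specialize (HJ2 k ltac:(lia)). unfold G in *.
    eapply Rle_lt_trans. apply gg_add; auto. apply (K_scale0 n K HK); [auto|lra]. apply (K_scale0 n K HK); [auto|lra].
    pose proof (gg_scale _ _ x l (Hb k) Hx ltac:(lra)). pose proof (gg_scale _ _ z (1 - l) (Hb k) Hz ltac:(lra)).
    specialize (Hpos k). nra.
  - intros x [Hx _]; auto.
  - intros x z [Hx HZ] Hxz Hz0. unfold Kge in Hz0. rewrite vsub_zero in Hz0. split; auto.
    intros e He. destruct (HZ e He) as [J HJ]. exists J. intros k Hk. specialize (HJ k Hk).
    unfold G in *. eapply Rle_lt_trans; [apply (gg_mono _ _ x z (Hb k)); auto|exact HJ]. }
assert (HZinv : forall x, Z x -> Z (mvec n AA x)).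
{ intros x [Hx HZ]. split. apply HApi; auto. intros e He.
  destruct (HZ (e / exp T0)) as [J HJ]. apply Rdiv_lt_0_compat; auto. apply exp_pos.
  exists J. intros k Hk. specialize (HJ k Hk). unfold G in *.
  eapply Rle_lt_trans. apply ggA; auto.
  assert (exp (aa (phi k) * T0) <= exp T0).
  { destruct (Rle_lt_or_eq_dec _ _ (Tm_nonneg T0 HT0)) as [HT|HT]. left. apply exp_increasing.
    specialize (Ha k). nra. rewrite <- HT. rewrite Rmult_0_r. lra. }
  pose proof (gg_nonneg _ _ x (Hb k) Hx). pose proof (exp_pos T0). pose proof (exp_pos (aa (phi k) * T0)).
  apply Rle_lt_trans with (exp T0 * gg (aa (phi k)) (TT (phi k)) x). nra.
  replace (e * gg (aa (phi k)) (TT (phi k)) x0) with (exp T0 * (e / exp T0 * gg (aa (phi k)) (TT (phi k)) x0)) by (field; lra).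
  apply Rmult_lt_compat_l; auto. }
destruct (HAirr Z HZface HZinv) as [H0|HKK].
- assert (Zy : Z y).
  { split; auto. intros e He.
    destruct (nrm1_sub_cv n (fun k => yy (phi k)) y Hycv (e / 2 * eps)) as [J1 HJ1]. nra.
    destruct (inv_Sn_small (e / 2)) as [J2 HJ2]. lra.
    exists (max J1 J2). intros k Hk. specialize (HJ1 k ltac:(lia)). specialize (HJ2 k ltac:(lia)).
    unfold Rdist in HJ1. rewrite Rminus_0_r, Rabs_pos_eq in HJ1 by apply nrm1_nonneg.
    assert (Hle : / (INR (phi k) + 1) <= / (INR k + 1)).
    { apply Rinv_le_contravar. pose proof (pos_INR k); lra. apply Rplus_le_compat_r. apply le_INR. apply incr_ge; auto. }
    assert (HKe : K (vadd (yy (phi k)) (vscale (e / 2) x0))) by (apply KM_add; auto; apply KM_scale; auto; lra).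
    unfold G. eapply Rle_lt_trans. apply (gg_mono _ _ (vadd (yy (phi k)) (vscale (e / 2) x0)) y (Hb k)); auto.
    { unfold Kge. replace (vsub (vadd (yy (phi k)) (vscale (e / 2) x0)) y) with (vsub (vscale (e / 2) x0) (vsub y (yy (phi k)))) by vext.
      apply KM_ball. intros i Hi. unfold vsub. rewrite (Hyv i Hi), (K_isVec n K HK _ (Hyk (phi k)) i Hi). lra. lra.
      rewrite nrm1_sub_sym. auto. }
    eapply Rle_lt_trans. apply gg_add; auto. apply KM_scale; auto; lra.
    pose proof (gg_scale _ _ x0 (e / 2) (Hb k) Hx0 ltac:(lra)). specialize (Hgy k). specialize (Hpos k).
    assert (/ (INR (phi k) + 1) * gg (aa (phi k)) (TT (phi k)) x0 < e / 2 * gg (aa (phi k)) (TT (phi k)) x0) by nra.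
    lra. }
  apply H0 in Zy. subst. rewrite nrm1_vzero in Hny. lra.
- destruct (proj2 (HKK x0) Hx0) as [_ HZ]. destruct (HZ 1 ltac:(lra)) as [J HJ]. specialize (HJ J (le_n _)).
  lra. Qed.

Lemma keyb : exists c, 0 < c /\ forall t B x, Tm t -> Sg t B -> K x -> c * nrm1 n (mvec n B x) <= nrm1 n x / eps.
Proof. destruct claim as [c [a0 [Hc [Ha0 Hcl]]]]. exists c. split; auto. intros t B x Ht HB Hx.
set (X := c * nrm1 n (mvec n B x)). set (Y := nrm1 n x / eps).
assert (HY : 0 <= Y) by (unfold Y; apply Rdiv_le_0_compat; [apply nrm1_nonneg|lra]).
assert (Hz : K (mvec n B x)) by (apply (Hpi t B Ht HB); auto).
assert (Hmain : forall a d, 0 < a < a0 -> 0 < d -> X <= exp (a * t) * (Y + d)).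
{ intros a d Ha Hd. destruct (Bnd_ex a ltac:(lra)) as [T1 [_ Hb]].
  set (N := nrm1 n (mvec n B x)).
  assert (HN : 0 <= N) by apply nrm1_nonneg.
  pose proof (exp_pos (a * t)).
  destruct HN as [HN|HN].
  2:{ unfold X. fold N. rewrite <- HN. rewrite Rmult_0_r. nra. }
  set (yv := vscale (/ N) (mvec n B x)).
  assert (Hyv : K yv) by (apply KM_scale; auto; apply Rinv_0_lt_compat; auto).
  assert (Hny : nrm1 n yv = 1). { unfold yv. rewrite nrm1_scale. fold N. rewrite Rabs_pos_eq. field; lra.
    left; apply Rinv_0_lt_compat; auto. }
  pose proof (Hcl a T1 Ha Hb yv Hyv Hny) as H1.
  pose proof (gg_scale a T1 (mvec n B x) (/ N) Hb Hz ltac:(left; apply Rinv_0_lt_compat; auto)) as H2. fold yv in H2.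
  pose proof (gg_B a T1 t B x Hb Hx Ht HB) as H3.
  pose proof (gg_ub a T1 x d Hb Hx Hd) as H4. fold Y in H4.
  pose proof (gg_x0_pos a T1 Hb) as H5. pose proof (gg_nonneg a T1 x Hb Hx).
  assert (c * N * gg a T1 x0 <= gg a T1 (mvec n B x)).
  { apply Rmult_le_reg_l with (/ N). apply Rinv_0_lt_compat; auto.
    replace (/ N * (c * N * gg a T1 x0)) with (c * gg a T1 x0) by (field; lra). lra. }
  assert (c * N * gg a T1 x0 <= exp (a * t) * (Y + d) * gg a T1 x0) by nra.
  unfold X. fold N. apply Rmult_le_reg_r with (gg a T1 x0); auto. }
apply Rnot_lt_le. intros Hlt.
set (rho := 2 * X / (X + Y)).
assert (Hrho : 1 < rho). { unfold rho. apply Rmult_lt_reg_r with (X + Y). lra.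
  replace (2 * X / (X + Y) * (X + Y)) with (2 * X) by (field; lra). lra. }
assert (Hl : 0 < ln rho) by (rewrite <- ln_1; apply ln_increasing; lra).
pose proof (Tm_nonneg t Ht).
set (a := Rmin (a0 / 2) (ln rho / (t + 1))).
assert (Ha1 : 0 < a). { unfold a. apply Rmin_glb_lt. lra. apply Rdiv_lt_0_compat; lra. }
assert (Ha2 : a < a0). { unfold a. pose proof (Rmin_l (a0 / 2) (ln rho / (t + 1))). lra. }
assert (Hat : a * t < ln rho).
{ pose proof (Rmin_r (a0 / 2) (ln rho / (t + 1))). fold a in H0.
  apply Rle_lt_trans with (ln rho / (t + 1) * t). nra.
  apply Rmult_lt_reg_r with (t + 1). lra. replace (ln rho / (t + 1) * t * (t + 1)) with (ln rho * t) by (field; lra). nra. }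
pose proof (Hmain a ((X - Y) / 2) ltac:(lra) ltac:(lra)).
assert (exp (a * t) < rho) by (rewrite <- (exp_ln rho) by lra; apply exp_increasing; auto).
assert (exp (a * t) * (Y + (X - Y) / 2) < rho * (Y + (X - Y) / 2)).
{ apply Rmult_lt_compat_r; lra. }
assert (rho * (Y + (X - Y) / 2) = X) by (unfold rho; field; lra).
lra. Qed.

Theorem core_bounded : sg_bounded n Tm Sg.
Proof. destruct keyb as [c [Hc Hk]].
set (C1 := 2 * (nrm1 n x0 + INR n * (eps / 2)) / (c * eps * eps)).
exists (INR n * C1). intros t B Ht HB.
assert (Hcol : forall j, (j < n)%nat -> fsum n (fun i => Rabs (B i j)) <= C1).
{ intros j Hj. set (xp := vadd x0 (vscale (1 * (eps / 2)) (ej j))). set (xm := vadd x0 (vscale (-1 * (eps / 2)) (ej j))).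
  assert (Kp : K xp) by (apply ej_pm; auto; lra). assert (Km : K xm) by (apply ej_pm; auto; lra).
  pose proof (Hk t B xp Ht HB Kp). pose proof (Hk t B xm Ht HB Km).
  assert (Hn : forall s, -1 <= s <= 1 -> nrm1 n (vadd x0 (vscale (s * (eps / 2)) (ej j))) <= nrm1 n x0 + INR n * (eps / 2)).
  { intros s Hs. unfold nrm1. rewrite <- fsum_const, <- fsum_plus. apply fsum_le. intros i Hi.
    unfold vadd, vscale, ej. eapply Rle_trans. apply Rabs_triang. apply Rplus_le_compat_l.
    rewrite Rabs_mult. rewrite Rabs_mult. rewrite (Rabs_pos_eq (eps / 2)) by lra.
    assert (Rabs s <= 1) by (apply Rabs_le; lra).
    assert (Rabs (if Nat.eqb i j then 1 else 0) <= 1) by (destruct (Nat.eqb i j); rewrite ?Rabs_R1, ?Rabs_R0; lra).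
    pose proof (Rabs_pos s). pose proof (Rabs_pos (if Nat.eqb i j then 1 else 0)).
    assert (Rabs s * Rabs (if Nat.eqb i j then 1 else 0) <= 1) by nra.
    replace (Rabs s * (eps / 2) * Rabs (if Nat.eqb i j then 1 else 0)) with ((Rabs s * Rabs (if Nat.eqb i j then 1 else 0)) * (eps / 2)) by ring.
    nra. }
  pose proof (Hn 1 ltac:(lra)). pose proof (Hn (-1) ltac:(lra)). fold xp xm in H1, H2.
  assert (Hcoef : forall i, (i < n)%nat -> eps * B i j = mvec n B xp i - mvec n B xm i).
  { intros i Hi. unfold xp, xm. rewrite !mvec_add, !mvec_scale. unfold vadd, vscale. rewrite mvec_ej by auto. lra. }
  assert (fsum n (fun i => Rabs (B i j)) * eps <= nrm1 n (mvec n B xp) + nrm1 n (mvec n B xm)).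
  { unfold nrm1. rewrite <- fsum_plus. rewrite Rmult_comm, <- fsum_scal. apply fsum_le. intros i Hi.
    assert (E1 : eps * Rabs (B i j) = Rabs (mvec n B xp i - mvec n B xm i)).
    { rewrite <- Hcoef by auto. rewrite Rabs_mult, (Rabs_pos_eq eps) by lra. auto. }
    rewrite E1. unfold Rminus. eapply Rle_trans. apply Rabs_triang. rewrite Rabs_Ropp. apply Rle_refl. }
  unfold C1. apply Rmult_le_reg_r with (c * eps * eps). repeat apply Rmult_lt_0_compat; lra.
  replace (2 * (nrm1 n x0 + INR n * (eps / 2)) / (c * eps * eps) * (c * eps * eps)) with (2 * (nrm1 n x0 + INR n * (eps / 2))) by (field; lra).
  assert (c * (nrm1 n (mvec n B xp) + nrm1 n (mvec n B xm)) <= (nrm1 n xp + nrm1 n xm) / eps) by (unfold Rdiv in *; nra).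
  assert (c * (fsum n (fun i => Rabs (B i j)) * eps) <= (nrm1 n xp + nrm1 n xm) / eps) by nra.
  assert (c * (fsum n (fun i => Rabs (B i j)) * eps) * eps <= nrm1 n xp + nrm1 n xm).
  { apply Rmult_le_reg_r with (/ eps). apply Rinv_0_lt_compat; lra.
    replace (c * (fsum n (fun i => Rabs (B i j)) * eps) * eps * / eps) with (c * (fsum n (fun i => Rabs (B i j)) * eps)) by (field; lra).
    auto. }
  nra. }
unfold mnorm. rewrite fsum_swap. rewrite <- fsum_const. apply fsum_le. auto. Qed.

End Main.

Definition SGprop (n : nat) (Tm : R -> Prop) (S : R -> Mat -> Prop) : Prop :=
  forall t s D B, Tm t -> Tm s -> S t D -> S s B -> Tm (t+s) /\
  exists u : nat -> Mat, (forall m, S (t+s) (u m)) /\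
    forall i j, (i<n)%nat -> (j<n)%nat -> Un_cv (fun m => u m i j) (mmul n D B i j).

Theorem core_thm n K Tm S : proper_cone n K -> (forall t, Tm t -> 0 <= t) ->
  (forall T, exists t, Tm t /\ T <= t) -> SGprop n Tm S ->
  (forall t B, Tm t -> S t B -> in_pi n K B) -> K_irreducible_sg n K Tm S -> jsr_eq n Tm S 1 ->
  sg_bounded n Tm S.
Proof. intros HK Hnn Hunb HSG Hpi Hirr Hjsr.
pose proof HK as (_ & _ & _ & _ & _ & _ & (x0 & eps & Hx0 & Heps & Hint)).
destruct Hirr as (T0 & HT0 & _ & m0 & w & Bs & Hw & Hw1 & HA).
eapply core_bounded; eauto. Qed.

Lemma nat_unb T : exists k, T <= INR k.
Proof. destruct (archimed T) as [H1 _]. destruct (Z_lt_le_dec (up T) 0).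
- exists 0%nat. assert (IZR (up T) < 0) by (apply IZR_lt; auto). simpl. lra.
- exists (Z.to_nat (up T)). rewrite INR_IZR_INZ, Z2Nat.id by auto. lra. Qed.

Lemma disc_S_isMat n M k B : disc_S n M k B -> isMat n B.
Proof. destruct k; simpl. intros ->. apply mid_isMat. intros (A & C & _ & _ & ->). apply mmul_isMat. Qed.

Lemma disc_S_comp n M k l D B : disc_S n M k D -> disc_S n M l B -> disc_S n M (k + l) (mmul n D B).
Proof. revert D. induction k; intros D HD HB; simpl in *.
- subst. rewrite mid_l; auto. eapply disc_S_isMat; eauto.
- destruct HD as (A & C & HA & HC & ->). exists A, (mmul n C B). split; auto. split. apply IHk; auto.
  apply mmul_assoc. Qed.

Lemma disc_case n M Tm Sg : (forall t, Tm t <-> exists k : nat, t = INR k) ->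
  (forall t B, Sg t B <-> exists k : nat, t = INR k /\ disc_S n M k B) ->
  (forall t, Tm t -> 0 <= t) /\ (forall T, exists t, Tm t /\ T <= t) /\ SGprop n Tm Sg.
Proof. intros HT HS. split; [|split].
- intros t Ht. apply HT in Ht. destruct Ht as [k ->]. apply pos_INR.
- intros T. destruct (nat_unb T) as [k Hk]. exists (INR k). split; auto. apply HT. eauto.
- intros t s D B Ht Hs HD HB. apply HS in HD, HB. destruct HD as (k & -> & HD). destruct HB as (l & -> & HB).
  split. apply HT. exists (k + l)%nat. rewrite plus_INR; auto.
  exists (fun _ => mmul n D B). split. intros _. apply HS. exists (k + l)%nat. rewrite plus_INR. split; auto.
  apply disc_S_comp; auto. intros; apply Un_cv_const. Qed.

Lemma fsum_S_sum N f : fsum (S N) f = sum_f_R0 f N.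
Proof. induction N; simpl. lra. simpl in IHN. rewrite IHN. auto. Qed.

Lemma fsum_shift N f : fsum (S N) f = f 0%nat + fsum N (fun j => f (S j)).
Proof. induction N; simpl. lra. simpl in IHN. rewrite IHN. lra. Qed.

Lemma exp_series x : Un_cv (fun N => fsum (S N) (fun k => / INR (Factorial.fact k) * x ^ k)) (exp x).
Proof. unfold exp. destruct (exist_exp x) as [l Hl]. cbn [proj1_sig]. intros e He.
destruct (Hl e He) as [N HN]. exists N. intros m Hm. rewrite fsum_S_sum. apply HN; auto. Qed.

Lemma cv_le_const u l c : Un_cv u l -> (forall N, u N <= c) -> l <= c.
Proof. intros H Hc. apply Rnot_lt_le. intros Hlt. destruct (H (l - c) ltac:(lra)) as [N HN].
specialize (HN N (le_n _)). specialize (Hc N). unfold Rdist in HN. apply Rabs_def2 in HN. lra. Qed.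

Lemma series_cv_sig (b : nat -> R) l : Un_cv (fun N => fsum (S N) b) l -> {l | Un_cv (fun N => sum_f_R0 b N) l}.
Proof. intros H. exists l. apply (Un_cv_ext (fun N => fsum (S N) b)); auto. intros; apply fsum_S_sum. Qed.

Lemma series_abs_cv (a : nat -> R) c x : 0 <= c ->
  (forall k, Rabs (a k) <= c * (/ INR (Factorial.fact k) * x ^ k)) -> exists l, Un_cv (fun N => fsum (S N) a) l.
Proof. intros Hc Ha.
set (b := fun k => c * (/ INR (Factorial.fact k) * x ^ k)).
assert (Hb : Un_cv (fun N => fsum (S N) b) (c * exp x)).
{ apply (Un_cv_ext (fun N => c * fsum (S N) (fun k => / INR (Factorial.fact k) * x ^ k))).
  intros; unfold b; rewrite fsum_scal; auto. apply CV_mult. apply Un_cv_const. apply exp_series. }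
assert (Hb2 : Un_cv (fun N => fsum (S N) (fun k => 2 * b k)) (2 * (c * exp x))).
{ apply (Un_cv_ext (fun N => 2 * fsum (S N) b)). intros; rewrite fsum_scal; auto.
  apply CV_mult. apply Un_cv_const. auto. }
destruct (Rseries_CV_comp (fun k => Rabs (a k) + a k) (fun k => 2 * b k)) as [lp Hp].
{ intros k. specialize (Ha k). fold (b k) in Ha. pose proof (Rle_abs (a k)). pose proof (Rle_abs (- a k)).
  rewrite Rabs_Ropp in *. lra. }
{ eapply series_cv_sig; eauto. }
destruct (Rseries_CV_comp (fun k => Rabs (a k)) b) as [lq Hq].
{ intros k. split. apply Rabs_pos. apply Ha. }
{ eapply series_cv_sig; eauto. }
exists (lp - lq). apply (Un_cv_ext (fun N => sum_f_R0 (fun k => Rabs (a k) + a k) N - sum_f_R0 (fun k => Rabs (a k)) N)).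
intros N. rewrite <- !fsum_S_sum. rewrite <- fsum_minus. apply fsum_ext; intros; lra.
apply CV_minus; auto. Qed.

Lemma entry_le_mnorm n M i j : isMat n M -> Rabs (M i j) <= mnorm n M.
Proof. intros HM. destruct (Nat.lt_ge_cases i n); destruct (Nat.lt_ge_cases j n).
- unfold mnorm. eapply Rle_trans. 2: apply (fsum_term n (fun i => fsum n (fun j => Rabs (M i j))) i); auto.
  apply (fsum_term n (fun j => Rabs (M i j))); auto. intros; apply Rabs_pos.
  intros; apply fsum_nonneg; intros; apply Rabs_pos.
- rewrite HM by auto. rewrite Rabs_R0. apply mnorm_nonneg.
- rewrite HM by auto. rewrite Rabs_R0. apply mnorm_nonneg.
- rewrite HM by auto. rewrite Rabs_R0. apply mnorm_nonneg. Qed.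

Lemma mnorm_mid n : mnorm n (mid n) = INR n.
Proof. unfold mnorm, mid. rewrite <- (Rmult_1_r (INR n)). rewrite <- fsum_const. apply fsum_ext. intros i Hi.
transitivity (fsum n (fun j => if Nat.eqb i j then 1 else 0)).
apply fsum_ext; intros j Hj. destruct (Nat.ltb_spec i n); try lia. simpl. destruct (Nat.eqb i j). apply Rabs_R1. apply Rabs_R0.
rewrite fsum_delta. destruct (Nat.ltb_spec i n); try lia. auto. Qed.

Lemma mnorm_mul n A B : mnorm n (mmul n A B) <= mnorm n A * mnorm n B.
Proof. unfold mnorm at 1. unfold mmul.
apply Rle_trans with (fsum n (fun i => fsum n (fun l => Rabs (A i l) * mnorm n B))).
- apply fsum_le; intros i Hi.
  apply Rle_trans with (fsum n (fun j => fsum n (fun l => Rabs (A i l) * Rabs (B l j)))).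
  + apply fsum_le; intros j Hj. destruct (Nat.ltb_spec i n); destruct (Nat.ltb_spec j n); try lia. simpl.
    eapply Rle_trans. apply fsum_abs. apply fsum_le; intros. rewrite Rabs_mult; lra.
  + rewrite fsum_swap. apply fsum_le; intros l Hl. rewrite fsum_scal. apply Rmult_le_compat_l. apply Rabs_pos.
    unfold mnorm. apply (fsum_term n (fun i => fsum n (fun j => Rabs (B i j)))); auto.
    intros; apply fsum_nonneg; intros; apply Rabs_pos.
- unfold mnorm at 2. rewrite Rmult_comm, <- fsum_scal. apply fsum_le; intros i Hi.
  rewrite <- fsum_scal. apply fsum_le; intros; lra. Qed.

Lemma mpow_isMat n A k : isMat n (mpow n A k).
Proof. destruct k; simpl. apply mid_isMat. apply mmul_isMat. Qed.

Lemma mnorm_mpow n A k : mnorm n (mpow n A k) <= INR n * mnorm n A ^ k.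
Proof. induction k; simpl. rewrite mnorm_mid. lra.
eapply Rle_trans. apply mnorm_mul. pose proof (mnorm_nonneg n A). nra. Qed.

Lemma mpow_entry n A k i j : Rabs (mpow n A k i j) <= INR n * mnorm n A ^ k.
Proof. eapply Rle_trans. apply entry_le_mnorm. apply mpow_isMat. apply mnorm_mpow. Qed.

Lemma mpow_scale n u A k : mpow n (mscale n u A) k = mscale n (u ^ k) (mpow n A k).
Proof. induction k; simpl.
- apply functional_extensionality; intro i; apply functional_extensionality; intro j. unfold mscale.
  pose proof (mid_isMat n i j). destruct (Nat.ltb_spec i n); destruct (Nat.ltb_spec j n); simpl; try lra;
  rewrite H; auto; lia.
- rewrite IHk. apply functional_extensionality; intro i; apply functional_extensionality; intro j.
  unfold mmul, mscale. destruct (Nat.ltb_spec i n); destruct (Nat.ltb_spec j n); simpl; try lra.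
  rewrite <- fsum_scal. apply fsum_ext; intros l Hl. destruct (Nat.ltb_spec l n); try lia. simpl. ring. Qed.

Lemma mscale_entry_abs n c M i j : Rabs (mscale n c M i j) <= Rabs c * Rabs (M i j).
Proof. unfold mscale. destruct (andb (Nat.ltb i n) (Nat.ltb j n)). rewrite Rabs_mult; lra.
rewrite Rabs_R0. pose proof (Rabs_pos c). pose proof (Rabs_pos (M i j)). nra. Qed.

Definition eterm n A u i j k := / INR (Factorial.fact k) * mpow n (mscale n u A) k i j.

Lemma eterm_bound n A u i j k : Rabs (eterm n A u i j k) <= INR n * (/ INR (Factorial.fact k) * (Rabs u * mnorm n A) ^ k).
Proof. unfold eterm. rewrite mpow_scale. rewrite Rabs_mult. rewrite Rabs_pos_eq.
2:{ left. apply Rinv_0_lt_compat. apply lt_0_INR. apply Factorial.lt_O_fact. }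
eapply Rle_trans. apply Rmult_le_compat_l. left. apply Rinv_0_lt_compat. apply lt_0_INR. apply Factorial.lt_O_fact.
apply mscale_entry_abs. rewrite <- RPow_abs. rewrite Rpow_mult_distr.
pose proof (mpow_entry n A k i j). pose proof (Rabs_pos (mpow n A k i j)).
assert (0 <= Rabs u ^ k) by (apply pow_le; apply Rabs_pos).
assert (0 < / INR (Factorial.fact k)) by (apply Rinv_0_lt_compat; apply lt_0_INR; apply Factorial.lt_O_fact).
assert (Rabs u ^ k * Rabs (mpow n A k i j) <= Rabs u ^ k * (INR n * mnorm n A ^ k)) by nra.
nra. Qed.

Lemma mexp_spec n A u i j : Un_cv (fun N => fsum (S N) (eterm n A u i j)) (mexp n (mscale n u A) i j).
Proof. destruct (series_abs_cv (eterm n A u i j) (INR n) (Rabs u * mnorm n A)) as [l Hl].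
apply pos_INR. intros; apply eterm_bound.
unfold mexp, Rlim. apply (epsilon_spec (inhabits 0) (fun l => Un_cv _ l)). exists l. exact Hl. Qed.

Lemma cv_ge u l c N : Un_cv u l -> (forall M, (N <= M)%nat -> c <= u M) -> c <= l.
Proof. intros H Hc. apply Rnot_lt_le. intros Hlt. destruct (H (c - l) ltac:(lra)) as [N' HN].
specialize (HN (max N N') ltac:(lia)). specialize (Hc (max N N') ltac:(lia)). unfold Rdist in HN. apply Rabs_def2 in HN. lra. Qed.

Lemma exp_partial_le x N : 0 <= x -> fsum N (fun k => / INR (Factorial.fact k) * x ^ k) <= exp x.
Proof. intros Hx. apply (cv_ge _ _ _ N (exp_series x)). intros M HM. apply fsum_mono. 2: lia.
intros k _. apply Rmult_le_pos. left; apply Rinv_0_lt_compat, lt_0_INR, Factorial.lt_O_fact. apply pow_le; auto. Qed.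

Lemma pow_diff u v Rb k : Rabs u <= Rb -> Rabs v <= Rb ->
  Rabs (u ^ k - v ^ k) <= INR k * Rb ^ (pred k) * Rabs (u - v).
Proof. intros Hu Hv. induction k.
- simpl. rewrite Rminus_diag, Rabs_R0. lra.
- replace (u ^ S k - v ^ S k) with (u * (u ^ k - v ^ k) + v ^ k * (u - v)) by (simpl; ring).
  eapply Rle_trans. apply Rabs_triang. rewrite !Rabs_mult.
  assert (HRb : 0 <= Rb) by (pose proof (Rabs_pos u); lra).
  assert (Rabs (v ^ k) <= Rb ^ k). { rewrite <- RPow_abs. apply pow_maj_Rabs. rewrite Rabs_Rabsolu. auto. }
  assert (Rabs u * Rabs (u ^ k - v ^ k) <= Rb * (INR k * Rb ^ pred k * Rabs (u - v))).
  { apply Rmult_le_compat; auto; apply Rabs_pos. }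
  assert (Rabs (v ^ k) * Rabs (u - v) <= Rb ^ k * Rabs (u - v)).
  { apply Rmult_le_compat_r; auto. apply Rabs_pos. }
  assert (Rb * (INR k * Rb ^ pred k * Rabs (u - v)) = INR k * Rb ^ k * Rabs (u - v)).
  { destruct k. simpl; ring. simpl; ring. }
  rewrite S_INR. simpl pred. lra. Qed.

Lemma sum_k_bound Rb al N : 0 <= Rb -> 0 <= al ->
  fsum (S N) (fun k => / INR (Factorial.fact k) * INR k * Rb ^ (pred k) * al ^ k) <= al * exp (Rb * al).
Proof. intros HR Ha. rewrite fsum_shift. simpl INR at 2. rewrite Rmult_0_r, Rmult_0_l, Rmult_0_l, Rplus_0_l.
replace (fsum N (fun j => / INR (Factorial.fact (S j)) * INR (S j) * Rb ^ pred (S j) * al ^ S j))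
  with (al * fsum N (fun j => / INR (Factorial.fact j) * (Rb * al) ^ j)).
apply Rmult_le_compat_l; auto. apply exp_partial_le. nra.
rewrite <- fsum_scal. apply fsum_ext; intros j _. rewrite fact_simpl, mult_INR.
simpl pred. rewrite Rpow_mult_distr. simpl pow. field. split. apply INR_fact_neq_0. apply not_0_INR. lia. Qed.

Lemma mexp_lip n A u v Rb i j : Rabs u <= Rb -> Rabs v <= Rb ->
  Rabs (mexp n (mscale n u A) i j - mexp n (mscale n v A) i j) <= Rabs (u - v) * (INR n * mnorm n A * exp (Rb * mnorm n A)).
Proof. intros Hu Hv. assert (HRb : 0 <= Rb) by (pose proof (Rabs_pos u); lra).
pose proof (mnorm_nonneg n A) as Hal. set (al := mnorm n A) in *.
apply (cv_le_const (fun N => Rabs (fsum (S N) (eterm n A u i j) - fsum (S N) (eterm n A v i j)))).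
apply Un_cv_abs. apply CV_minus; apply mexp_spec.
intros N. rewrite <- fsum_minus. eapply Rle_trans. apply fsum_abs.
apply Rle_trans with (fsum (S N) (fun k => (Rabs (u - v) * INR n) * (/ INR (Factorial.fact k) * INR k * Rb ^ (pred k) * al ^ k))).
- apply fsum_le. intros k _. unfold eterm. rewrite !mpow_scale.
  replace (/ INR (Factorial.fact k) * mscale n (u ^ k) (mpow n A k) i j - / INR (Factorial.fact k) * mscale n (v ^ k) (mpow n A k) i j)
    with (/ INR (Factorial.fact k) * ((u ^ k - v ^ k) * (if andb (Nat.ltb i n) (Nat.ltb j n) then mpow n A k i j else 0)))
    by (unfold mscale; destruct (andb (Nat.ltb i n) (Nat.ltb j n)); ring).
  assert (Hf : 0 < / INR (Factorial.fact k)) by (apply Rinv_0_lt_compat, lt_0_INR, Factorial.lt_O_fact).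
  rewrite Rabs_mult, (Rabs_pos_eq (/ _)) by lra. rewrite Rabs_mult.
  pose proof (pow_diff u v Rb k Hu Hv).
  assert (Rabs (if andb (Nat.ltb i n) (Nat.ltb j n) then mpow n A k i j else 0) <= INR n * al ^ k).
  { destruct (andb (Nat.ltb i n) (Nat.ltb j n)). apply mpow_entry. rewrite Rabs_R0.
    apply Rmult_le_pos. apply pos_INR. apply pow_le; auto. }
  pose proof (Rabs_pos (u ^ k - v ^ k)). pose proof (Rabs_pos (if andb (Nat.ltb i n) (Nat.ltb j n) then mpow n A k i j else 0)).
  assert (Rabs (u ^ k - v ^ k) * Rabs (if andb (Nat.ltb i n) (Nat.ltb j n) then mpow n A k i j else 0)
     <= (INR k * Rb ^ pred k * Rabs (u - v)) * (INR n * al ^ k)) by (apply Rmult_le_compat; auto).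
  replace (Rabs (u - v) * INR n * (/ INR (Factorial.fact k) * INR k * Rb ^ pred k * al ^ k))
    with (/ INR (Factorial.fact k) * ((INR k * Rb ^ pred k * Rabs (u - v)) * (INR n * al ^ k))) by ring.
  apply Rmult_le_compat_l; lra.
- rewrite fsum_scal. pose proof (sum_k_bound Rb al N HRb Hal).
  pose proof (Rabs_pos (u - v)). pose proof (pos_INR n).
  replace (Rabs (u - v) * (INR n * al * exp (Rb * al))) with (Rabs (u - v) * INR n * (al * exp (Rb * al))) by ring.
  apply Rmult_le_compat_l; auto. nra. Qed.

Lemma mexp_cv n A (us : nat -> R) u Rb i j : (forall m, Rabs (us m) <= Rb) -> Rabs u <= Rb -> Un_cv us u ->
  Un_cv (fun m => mexp n (mscale n (us m) A) i j) (mexp n (mscale n u A) i j).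
Proof. intros Hus Hu Hcv e He. set (C := INR n * mnorm n A * exp (Rb * mnorm n A) + 1).
assert (HC : 0 < C). { unfold C. pose proof (pos_INR n). pose proof (mnorm_nonneg n A). pose proof (exp_pos (Rb * mnorm n A)).
  assert (0 <= INR n * mnorm n A) by nra. nra. }
destruct (Hcv (e / C)) as [N HN]. apply Rdiv_lt_0_compat; auto. exists N. intros m Hm.
specialize (HN m Hm). unfold Rdist in *. eapply Rle_lt_trans. apply (mexp_lip n A (us m) u Rb i j); auto.
assert (Rabs (us m - u) * C < e). { apply Rmult_lt_reg_r with (/ C). apply Rinv_0_lt_compat; auto.
  replace (Rabs (us m - u) * C * / C) with (Rabs (us m - u)) by (field; lra). auto. }
unfold C in H. pose proof (Rabs_pos (us m - u)). nra. Qed.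

Lemma jprod_ext n tk tk' Am Am' Pm Pm' k :
  (forall l, (l <= k)%nat -> tk l = tk' l) -> (forall l, (l < k)%nat -> Am l = Am' l /\ Pm l = Pm' l) ->
  jprod n tk Am Pm k = jprod n tk' Am' Pm' k.
Proof. induction k; intros H1 H2; simpl; auto.
rewrite IHk by (intros; try apply H1; try apply H2; lia).
rewrite (H1 (S k)), (H1 k) by lia. destruct (H2 k ltac:(lia)) as [-> ->]. auto. Qed.

Lemma jprod_S n tk Am Pm l : jprod n tk Am Pm (S l) =
  mmul n (mmul n (mexp n (mscale n (tk (S l) - tk l) (Am l))) (Pm l)) (jprod n tk Am Pm l).
Proof. reflexivity. Qed.

Definition catT (tk : nat -> R) k s (tk' : nat -> R) : nat -> R :=
  fun l => if Nat.leb l k then tk l else s + tk' (l - S k)%nat.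
Definition catM (Am : nat -> Mat) k (Am' : nat -> Mat) : nat -> Mat :=
  fun l => if Nat.leb l k then Am l else Am' (l - S k)%nat.

Lemma catT_le tk k s tk' l : (l <= k)%nat -> catT tk k s tk' l = tk l.
Proof. intros H. unfold catT. destruct (Nat.leb_spec l k); auto; lia. Qed.
Lemma catT_gt tk k s tk' j : catT tk k s tk' (S k + j) = s + tk' j.
Proof. unfold catT. destruct (Nat.leb_spec (S k + j) k); try lia. replace (S k + j - S k)%nat with j by lia. auto. Qed.
Lemma catM_le Am k Am' l : (l <= k)%nat -> catM Am k Am' l = Am l.
Proof. intros H. unfold catM. destruct (Nat.leb_spec l k); auto; lia. Qed.
Lemma catM_gt Am k Am' j : catM Am k Am' (S k + j) = Am' j.
Proof. unfold catM. destruct (Nat.leb_spec (S k + j) k); try lia. replace (S k + j - S k)%nat with j by lia. auto. Qed.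

Definition Bof n (tk : nat -> R) (Am Pm : nat -> Mat) (k : nat) (s : R) : Mat :=
  mmul n (mmul n (mexp n (mscale n (s - tk k) (Am k))) (Pm k)) (jprod n tk Am Pm k).

Lemma jprod_cat n tk Am Pm k s tk' Am' Pm' : tk' 0%nat = 0 -> forall m,
  jprod n (catT tk k s tk') (catM Am k Am') (catM Pm k Pm') (S k + m) = mmul n (jprod n tk' Am' Pm' m) (Bof n tk Am Pm k s).
Proof. intros H0 m. induction m.
- rewrite Nat.add_0_r. simpl jprod at 2. rewrite mid_l by apply mmul_isMat.
  simpl jprod. unfold Bof. rewrite (jprod_ext n (catT tk k s tk') tk (catM Am k Am') Am (catM Pm k Pm') Pm k).
  2:{ intros; apply catT_le; auto. } 2:{ intros; rewrite !catM_le by lia; auto. }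
  assert (E : catT tk k s tk' (S k) = s + tk' 0%nat) by (rewrite <- (catT_gt tk k s tk' 0); f_equal; lia).
  rewrite E, H0, Rplus_0_r. rewrite catT_le by lia. rewrite catM_le, catM_le by lia. auto.
- replace (S k + S m)%nat with (S (S k + m)) by lia. rewrite jprod_S, IHm.
  replace (S (S k + m)) with (S k + S m)%nat by lia. rewrite catT_gt, catT_gt, catM_gt, catM_gt.
  replace (s + tk' (S m) - (s + tk' m)) with (tk' (S m) - tk' m) by ring.
  rewrite (jprod_S n tk' Am' Pm' m). rewrite !mmul_assoc. auto. Qed.

Lemma jump_isMat n M t B : jump_S n M t B -> isMat n B.
Proof. intros [[_ ->]|[_ (tk & Am & Pm & k & _ & _ & _ & _ & _ & ->)]]. apply mid_isMat. apply mmul_isMat. Qed.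

Lemma jump_comp n M t D s tk Am Pm k : 0 < t -> jump_S n M t D ->
  tk 0%nat = 0 -> (forall l, tk l < tk (S l)) -> (forall T, exists l, T < tk l) -> (forall l, M (Am l) (Pm l)) ->
  tk k < s -> s < tk (S k) -> jump_S n M (t + s) (mmul n D (Bof n tk Am Pm k s)).
Proof. intros Ht HD H0 Hinc Hunb HM Hk1 Hk2.
destruct HD as [[Ht0 _]|[_ (tk' & Am' & Pm' & m & H0' & Hinc' & Hunb' & HM' & [Hm1 Hm2] & ->)]]. lra.
assert (Hs : 0 < s). { assert (tk 0%nat <= tk k). { clear -Hinc. induction k. lra. specialize (Hinc k). lra. } lra. }
right. split. lra.
exists (catT tk k s tk'), (catM Am k Am'), (catM Pm k Pm'), (S k + m)%nat.
split; [|split; [|split; [|split; [|split]]]].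
- rewrite catT_le by lia; auto.
- intros l. destruct (Nat.le_gt_cases (S l) k).
  + rewrite !catT_le by lia. auto.
  + destruct (Nat.eq_dec l k).
    * subst. rewrite catT_le by lia. replace (S k) with (S k + 0)%nat by lia. rewrite catT_gt, H0'. lra.
    * replace l with (S k + (l - S k))%nat by lia. replace (S (S k + (l - S k))) with (S k + S (l - S k))%nat by lia.
      rewrite !catT_gt. specialize (Hinc' (l - S k)%nat). lra.
- intros T. destruct (Hunb' (T - s)) as [l Hl]. exists (S k + l)%nat. rewrite catT_gt. lra.
- intros l. destruct (Nat.le_gt_cases l k). rewrite !catM_le by lia. auto.
  replace l with (S k + (l - S k))%nat by lia. rewrite !catM_gt. auto.
- rewrite catT_gt. replace (S (S k + m)) with (S k + S m)%nat by lia. rewrite catT_gt. lra.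
- rewrite catT_gt, catM_gt, catM_gt, jprod_cat by auto.
  replace (t + s - (s + tk' m)) with (t - tk' m) by ring. rewrite !mmul_assoc. auto. Qed.

Lemma mmul_cv n (U V : nat -> Mat) U0 V0 :
  (forall i j, (i < n)%nat -> (j < n)%nat -> Un_cv (fun m => U m i j) (U0 i j)) ->
  (forall i j, (i < n)%nat -> (j < n)%nat -> Un_cv (fun m => V m i j) (V0 i j)) ->
  forall i j, (i < n)%nat -> (j < n)%nat -> Un_cv (fun m => mmul n (U m) (V m) i j) (mmul n U0 V0 i j).
Proof. intros HU HV i j Hi Hj. unfold mmul. destruct (Nat.ltb_spec i n); destruct (Nat.ltb_spec j n); try lia. simpl.
apply (fsum_cv n (fun m k => U m i k * V m k j)). intros k Hk. apply CV_mult; auto. Qed.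

Lemma tk_mono (tk : nat -> R) : (forall l, tk l < tk (S l)) -> forall a b, (a <= b)%nat -> tk a <= tk b.
Proof. intros H a b Hab. induction Hab. lra. specialize (H m). lra. Qed.

Lemma jump_approx n s tk Am Pm k : 0 < s -> tk 0%nat = 0 -> (forall l, tk l < tk (S l)) ->
  (forall T, exists l, T < tk l) -> tk k = s ->
  exists tks : nat -> nat -> R, (forall m, tks m 0%nat = 0 /\ (forall l, tks m l < tks m (S l)) /\
     (forall T, exists l, T < tks m l) /\ tks m k < s /\ tks m (S k) = tk (S k)) /\
   forall i j, (i < n)%nat -> (j < n)%nat -> Un_cv (fun m => Bof n (tks m) Am Pm k s i j) (Bof n tk Am Pm k s i j).
Proof. intros Hs H0 Hinc Hunb Hk.
destruct k as [|k1]. lra.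
set (L := tk (S k1) - tk k1). assert (HL : 0 < L) by (unfold L; specialize (Hinc k1); lra).
set (dl := fun m : nat => L / (INR m + 2)).
assert (Hdl : forall m, 0 < dl m < L).
{ intros m. unfold dl. pose proof (pos_INR m). split. apply Rdiv_lt_0_compat; lra.
  apply Rmult_lt_reg_r with (INR m + 2). lra. replace (L / (INR m + 2) * (INR m + 2)) with L by (field; lra). nra. }
assert (Hdcv : Un_cv dl 0).
{ apply (Un_cv_squeeze0 dl (fun m => L * / (INR m + 1))).
  intros m. specialize (Hdl m). split. lra. unfold dl. unfold Rdiv. apply Rmult_le_compat_l. lra.
  apply Rinv_le_contravar. pose proof (pos_INR m); lra. lra.
  replace 0 with (L * 0) by ring. apply CV_mult. apply Un_cv_const. apply Un_cv_inv_Sn. }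
set (tks := fun m l => if Nat.eqb l (S k1) then s - dl m else tk l).
exists tks. split.
- intros m. specialize (Hdl m). split; [|split; [|split; [|split]]].
  + unfold tks. simpl. auto.
  + intros l. unfold tks. destruct (Nat.eqb_spec l (S k1)); destruct (Nat.eqb_spec (S l) (S k1)); try lia.
    * subst. specialize (Hinc (S k1)). lra.
    * assert (l = k1) by lia. subst. unfold L in *. lra.
    * auto.
  + intros T. destruct (Hunb T) as [l Hl]. destruct (Nat.eq_dec l (S k1)).
    * exists (S (S k1)). unfold tks. destruct (Nat.eqb_spec (S (S k1)) (S k1)); try lia. subst. specialize (Hinc (S k1)). lra.
    * exists l. unfold tks. destruct (Nat.eqb_spec l (S k1)); try lia. auto.
  + unfold tks. rewrite Nat.eqb_refl. lra.
  + unfold tks. destruct (Nat.eqb_spec (S (S k1)) (S k1)); try lia. auto.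
- assert (Hj : forall m, jprod n (tks m) Am Pm k1 = jprod n tk Am Pm k1).
  { intros m. apply jprod_ext. intros l Hl. unfold tks. destruct (Nat.eqb_spec l (S k1)); try lia; auto.
    intros; auto. }
  assert (E1 : forall m, Bof n (tks m) Am Pm (S k1) s =
     mmul n (mmul n (mexp n (mscale n (dl m) (Am (S k1)))) (Pm (S k1)))
       (mmul n (mmul n (mexp n (mscale n (L - dl m) (Am k1))) (Pm k1)) (jprod n tk Am Pm k1))).
  { intros m. unfold Bof. rewrite jprod_S, Hj. unfold tks. rewrite Nat.eqb_refl.
    destruct (Nat.eqb_spec k1 (S k1)); try lia.
    replace (s - (s - dl m)) with (dl m) by ring. replace (s - dl m - tk k1) with (L - dl m) by (unfold L; lra). auto. }
  assert (E2 : Bof n tk Am Pm (S k1) s =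
     mmul n (mmul n (mexp n (mscale n 0 (Am (S k1)))) (Pm (S k1)))
       (mmul n (mmul n (mexp n (mscale n L (Am k1))) (Pm k1)) (jprod n tk Am Pm k1))).
  { unfold Bof, L. rewrite jprod_S. rewrite Hk. replace (s - s) with 0 by ring. reflexivity. }
  intros i j Hi Hj'. rewrite E2. apply (Un_cv_ext (fun m => mmul n (mmul n (mexp n (mscale n (dl m) (Am (S k1)))) (Pm (S k1)))
       (mmul n (mmul n (mexp n (mscale n (L - dl m) (Am k1))) (Pm k1)) (jprod n tk Am Pm k1)) i j)).
  intros m. rewrite E1. auto.
  revert i j Hi Hj'. apply mmul_cv; apply mmul_cv; try apply mmul_cv; intros; try apply Un_cv_const.
  + apply (mexp_cv n _ dl 0 L). intros m; specialize (Hdl m); rewrite Rabs_pos_eq; lra.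
    rewrite Rabs_R0; lra. auto.
  + apply (mexp_cv n _ (fun m => L - dl m) L L). intros m; specialize (Hdl m); rewrite Rabs_pos_eq; lra.
    rewrite Rabs_pos_eq; lra. assert (HH : Un_cv (fun m => L - dl m) (L - 0)) by (apply CV_minus; [apply Un_cv_const|auto]).
    rewrite Rminus_0_r in HH. exact HH. Qed.

Lemma jump_case n M Tm Sg : (forall t, Tm t <-> 0 <= t) -> (forall t B, Sg t B <-> 0 <= t /\ jump_S n M t B) ->
  (forall t, Tm t -> 0 <= t) /\ (forall T, exists t, Tm t /\ T <= t) /\ SGprop n Tm Sg.
Proof. intros HT HS. split; [|split].
- intros t Ht. apply HT; auto.
- intros T. exists (Rmax T 0). split. apply HT. apply Rmax_r. apply Rmax_l.
- intros t s D B Ht Hs HD HB. apply HT in Ht, Hs. apply HS in HD, HB. destruct HD as [_ HD]. destruct HB as [_ HB].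
  split. apply HT. lra.
  destruct (Rle_lt_or_eq_dec _ _ Hs) as [Hs'|Hs'].
  2:{ subst. destruct HB as [[_ ->]|[HH _]]; [|lra]. exists (fun _ => D). split.
      intros _. apply HS. rewrite Rplus_0_r. auto. intros; rewrite mid_r. apply Un_cv_const. eapply jump_isMat; eauto. }
  destruct (Rle_lt_or_eq_dec _ _ Ht) as [Ht'|Ht'].
  2:{ subst. destruct HD as [[_ ->]|[HH _]]; [|lra]. exists (fun _ => B). split.
      intros _. apply HS. rewrite Rplus_0_l. auto. intros; rewrite mid_l. apply Un_cv_const. eapply jump_isMat; eauto. }
  destruct HB as [[HH _]|[_ (tk & Am & Pm & k & H0 & Hinc & Hunb & HM & [Hk1 Hk2] & ->)]]; [lra|].
  fold (Bof n tk Am Pm k s).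
  destruct (Rle_lt_or_eq_dec _ _ Hk1) as [Hk1'|Hk1'].
  + exists (fun _ => mmul n D (Bof n tk Am Pm k s)). split. intros _. apply HS. split. lra.
    apply jump_comp; auto. intros; apply Un_cv_const.
  + destruct (jump_approx n s tk Am Pm k Hs' H0 Hinc Hunb Hk1') as [tks [Htks Hcv]].
    exists (fun m => mmul n D (Bof n (tks m) Am Pm k s)). split.
    * intros m. destruct (Htks m) as (A1 & A2 & A3 & A4 & A5). apply HS. split. lra.
      apply jump_comp; auto. rewrite A5. auto.
    * apply mmul_cv; auto. intros; apply Un_cv_const. Qed.

Lemma outer_mono (A B : R -> Prop) r : (forall x, A x -> B x) -> outer_le B r -> outer_le A r.
Proof. intros H HB e He. destruct (HB e He) as (a & b & H1 & H2 & H3). exists a, b. split; auto. Qed.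

Lemma outer_mono_r A r r' : r <= r' -> outer_le A r -> outer_le A r'.
Proof. intros Hr HA e He. destruct (HA e He) as (a & b & H1 & H2 & H3). exists a, b. split; auto. split; auto.
intros m. specialize (H3 m). lra. Qed.

Definition inter (f g : nat -> R) (k : nat) : R := if Nat.even k then f (Nat.div2 k) else g (Nat.div2 k).

Lemma even_double k : Nat.even (2 * k) = true.
Proof. rewrite Nat.even_mul. auto. Qed.
Lemma even_sdouble k : Nat.even (S (2 * k)) = false.
Proof. rewrite Nat.even_succ, <- Nat.negb_even, even_double. auto. Qed.

Lemma inter_even f g k : inter f g (2 * k) = f k.
Proof. unfold inter. rewrite even_double, Nat.div2_double. auto. Qed.
Lemma inter_odd f g k : inter f g (S (2 * k)) = g k.
Proof. unfold inter. rewrite even_sdouble, Nat.div2_succ_double. auto. Qed.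

Lemma fsum_inter m F G : fsum (2 * m) (fun k => inter F G k) = fsum m F + fsum m G.
Proof. induction m. simpl. lra. replace (2 * S m)%nat with (S (S (2 * m))) by lia. rewrite !fsum_S.
rewrite IHm. rewrite inter_odd, inter_even. lra. Qed.

Lemma outer_union A B r1 r2 : outer_le A r1 -> outer_le B r2 -> outer_le (fun x => A x \/ B x) (r1 + r2).
Proof. intros HA HB e He. destruct (HA (e / 2)) as (a & b & H1 & H2 & H3). lra.
destruct (HB (e / 2)) as (a' & b' & H1' & H2' & H3'). lra.
exists (inter a a'), (inter b b'). split; [|split].
- intros k. unfold inter. destruct (Nat.even k); auto.
- intros x [Hx|Hx].
  + destruct (H2 x Hx) as [k Hk]. exists (2 * k)%nat. rewrite !inter_even. auto.
  + destruct (H2' x Hx) as [k Hk]. exists (S (2 * k)). rewrite !inter_odd. auto.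
- intros m. apply Rle_trans with (fsum (2 * m) (fun k => inter b b' k - inter a a' k)).
  apply fsum_mono. intros k _. unfold inter. destruct (Nat.even k); [specialize (H1 (Nat.div2 k))|specialize (H1' (Nat.div2 k))]; lra. lia.
  replace (fsum (2 * m) (fun k => inter b b' k - inter a a' k)) with (fsum (2 * m) (fun k => inter (fun j => b j - a j) (fun j => b' j - a' j) k)).
  rewrite fsum_inter. specialize (H3 m). specialize (H3' m). lra.
  apply fsum_ext. intros k _. unfold inter. destruct (Nat.even k); auto. Qed.

Lemma outer_shift A r s : outer_le A r -> outer_le (fun x => A (x - s)) r.
Proof. intros HA e He. destruct (HA e He) as (a & b & H1 & H2 & H3).
exists (fun k => a k + s), (fun k => b k + s). split; [|split].
- intros k; specialize (H1 k); lra.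
- intros x Hx. destruct (H2 _ Hx) as [k Hk]. exists k. lra.
- intros m. eapply Rle_trans; [|apply (H3 m)]. right. apply fsum_ext. intros; ring. Qed.

Lemma outer_point s : outer_le (fun x => x = s) 0.
Proof. intros e He. exists (fun _ => s), (fun _ => s). split; [|split].
intros; lra. intros x Hx. exists 0%nat. lra.
intros m. transitivity (fsum m (fun _ => 0)). right. apply fsum_ext; intros; ring. rewrite fsum_zero. lra. Qed.

Lemma outer_nonneg A r : outer_le A r -> 0 <= r \/ (forall x, ~ A x).
Proof. intros H. destruct (Rle_lt_dec 0 r) as [H0|H0]. auto. right. intros x Hx.
destruct (H (- r / 2)) as (a & b & H1 & H2 & H3). lra.
specialize (H3 0%nat). simpl in H3. lra. Qed.

Lemma null_union A B : null_set A -> null_set B -> null_set (fun x => A x \/ B x).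
Proof. intros HA HB. unfold null_set. replace 0 with (0 + 0) by ring. apply outer_union; auto. Qed.

Lemma meas_ext E E' : (forall x, E x <-> E' x) -> leb_measurable E -> leb_measurable E'.
Proof. intros H HE A r Hr. destruct (HE A r Hr) as (r1 & r2 & H1 & H2 & H3). exists r1, r2. split; [|split; auto].
apply (outer_mono _ _ r1 (fun x Hx => conj (proj1 Hx) (proj2 (H x) (proj2 Hx))) H1).
apply (outer_mono _ _ r2 (fun x Hx => conj (proj1 Hx) (fun HE' => proj2 Hx (proj1 (H x) HE'))) H2). Qed.

Lemma meas_compl E : leb_measurable E -> leb_measurable (fun x => ~ E x).
Proof. intros HE A r Hr. destruct (HE A r Hr) as (r1 & r2 & H1 & H2 & H3). exists r2, r1. split; [|split].
auto. apply (outer_mono _ (fun x => A x /\ E x) r1); auto. intros x [Hx Hn]. split; auto. apply NNPP; auto. lra. Qed.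

Lemma meas_union E F : leb_measurable E -> leb_measurable F -> leb_measurable (fun x => E x \/ F x).
Proof. intros HE HF A r Hr. destruct (HE A r Hr) as (r1 & r2 & H1 & H2 & H3).
destruct (HF (fun x => A x /\ ~ E x) r2 H2) as (r3 & r4 & H4 & H5 & H6).
exists (r1 + r3), r4. split; [|split].
- apply (outer_mono _ (fun x => (A x /\ E x) \/ ((A x /\ ~ E x) /\ F x))). 2: apply outer_union; auto.
  intros x [Hx [HEx|HFx]]. left; auto. destruct (classic (E x)). left; auto. right; auto.
- apply (outer_mono _ (fun x => (A x /\ ~ E x) /\ ~ F x) r4); auto. intros x [Hx Hn]. split; [split|]; auto.
- lra. Qed.

Lemma meas_inter E F : leb_measurable E -> leb_measurable F -> leb_measurable (fun x => E x /\ F x).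
Proof. intros HE HF. apply (meas_ext (fun x => ~ (~ E x \/ ~ F x))).
intros x. split. intros H. split; apply NNPP; intros Hn; apply H; auto. intros [H1 H2] [H|H]; auto.
apply meas_compl, meas_union; apply meas_compl; auto. Qed.

Lemma meas_null N : null_set N -> leb_measurable N.
Proof. intros HN A r Hr. exists 0, r. split; [|split].
apply (outer_mono _ N); auto. intros x [_ H]; auto.
apply (outer_mono _ A); auto. intros x [H _]; auto. lra. Qed.

Lemma meas_shift E s : leb_measurable E -> leb_measurable (fun x => E (x - s)).
Proof. intros HE A r Hr.
assert (Hr' : outer_le (fun y => A (y + s)) r).
{ apply (outer_mono _ (fun y => A (y - - s))). intros y Hy. replace (y - - s) with (y + s) by ring. auto.
  apply (outer_shift A); auto. }
destruct (HE _ r Hr') as (r1 & r2 & H1 & H2 & H3). exists r1, r2. split; [|split]; auto.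
- apply (outer_mono _ (fun x => (fun y => A (y + s) /\ E y) (x - s))). intros x [Hx HEx]. split; auto.
  replace (x - s + s) with x by ring. auto. apply (outer_shift (fun y => A (y + s) /\ E y)); auto.
- apply (outer_mono _ (fun x => (fun y => A (y + s) /\ ~ E y) (x - s))). intros x [Hx HEx]. split; auto.
  replace (x - s + s) with x by ring. auto. apply (outer_shift (fun y => A (y + s) /\ ~ E y)); auto. Qed.

Lemma ac_ext t f g : (forall u, f u = g u) -> abs_cont_on t f -> abs_cont_on t g.
Proof. intros H Hf. replace g with f; auto. apply functional_extensionality; auto. Qed.

Lemma ac_const t c : abs_cont_on t (fun _ => c).
Proof. unfold abs_cont_on. intros e He. exists 1. split. lra. intros m a b _ _ _.
replace (fsum m (fun k => Rabs (c - c))) with (fsum m (fun _ => 0)). rewrite fsum_zero. auto.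
apply fsum_ext; intros. rewrite Rminus_diag, Rabs_R0. auto. Qed.

Lemma ac_plus t f g : abs_cont_on t f -> abs_cont_on t g -> abs_cont_on t (fun v => f v + g v).
Proof. unfold abs_cont_on in *. intros Hf Hg e He. destruct (Hf (e / 2)) as [d1 [Hd1 H1]]. lra. destruct (Hg (e / 2)) as [d2 [Hd2 H2]]. lra.
exists (Rmin d1 d2). split. apply Rmin_glb_lt; auto. intros m a b Ha Hb Hs.
pose proof (Rmin_l d1 d2). pose proof (Rmin_r d1 d2).
specialize (H1 m a b Ha Hb ltac:(lra)). specialize (H2 m a b Ha Hb ltac:(lra)).
eapply Rle_lt_trans. apply (fsum_le _ _ (fun k => Rabs (f (b k) - f (a k)) + Rabs (g (b k) - g (a k)))).
intros k _. replace (f (b k) + g (b k) - (f (a k) + g (a k))) with ((f (b k) - f (a k)) + (g (b k) - g (a k))) by ring.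
apply Rabs_triang. rewrite fsum_plus. lra. Qed.

Lemma ac_mulc t f c : abs_cont_on t f -> abs_cont_on t (fun v => f v * c).
Proof. unfold abs_cont_on in *. intros Hf e He. destruct (Hf (e / (Rabs c + 1))) as [d [Hd H]]. apply Rdiv_lt_0_compat; auto. pose proof (Rabs_pos c); lra.
exists d. split; auto. intros m a b Ha Hb Hs. specialize (H m a b Ha Hb Hs).
replace (fsum m (fun k => Rabs (f (b k) * c - f (a k) * c))) with (Rabs c * fsum m (fun k => Rabs (f (b k) - f (a k)))).
pose proof (Rabs_pos c). assert (Rabs c * (e / (Rabs c + 1)) < e).
{ apply Rmult_lt_reg_r with (Rabs c + 1). lra. replace (Rabs c * (e / (Rabs c + 1)) * (Rabs c + 1)) with (Rabs c * e) by (field; lra). nra. }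
assert (0 <= fsum m (fun k => Rabs (f (b k) - f (a k)))) by (apply fsum_nonneg; intros; apply Rabs_pos).
nra. rewrite <- fsum_scal. apply fsum_ext; intros. rewrite <- Rabs_mult. f_equal. ring. Qed.

Lemma ac_fsum t m (F : nat -> R -> R) : (forall k, (k < m)%nat -> abs_cont_on t (F k)) ->
  abs_cont_on t (fun v => fsum m (fun k => F k v)).
Proof. induction m; intros H. exact (ac_const t 0). apply (ac_plus t (fun v => fsum m (fun k => F k v)) (F m)).
apply IHm; intros; apply H; lia. apply H; lia. Qed.

Section Glue.
Variables (s t : R) (f g : R -> R).
Hypothesis Hs : 0 <= s.
Hypothesis Ht : 0 <= t.
Definition lo u := if Rle_dec u s then u else s.
Definition hi u := if Rle_dec u s then 0 else u - s.

Lemma lo_mono u v : u <= v -> lo u <= lo v.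
Proof. intros H. unfold lo. destruct (Rle_dec u s); destruct (Rle_dec v s); lra. Qed.
Lemma hi_mono u v : u <= v -> hi u <= hi v.
Proof. intros H. unfold hi. destruct (Rle_dec u s); destruct (Rle_dec v s); lra. Qed.
Lemma lo_lip u v : u <= v -> lo v - lo u <= v - u.
Proof. intros H. unfold lo. destruct (Rle_dec u s); destruct (Rle_dec v s); lra. Qed.
Lemma hi_lip u v : u <= v -> hi v - hi u <= v - u.
Proof. intros H. unfold hi. destruct (Rle_dec u s); destruct (Rle_dec v s); lra. Qed.

Lemma ac_glue : abs_cont_on s f -> abs_cont_on t g -> g 0 = f s ->
  abs_cont_on (s + t) (fun u => if Rle_dec u s then f u else g (u - s)).
Proof. unfold abs_cont_on in *. intros Hf Hg Hfg e He. destruct (Hf (e / 2)) as [d1 [Hd1 H1]]. lra. destruct (Hg (e / 2)) as [d2 [Hd2 H2]]. lra.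
exists (Rmin d1 d2). split. apply Rmin_glb_lt; auto. intros m a b Ha Hb Hsum.
pose proof (Rmin_l d1 d2). pose proof (Rmin_r d1 d2).
assert (Hh : forall u, (if Rle_dec u s then f u else g (u - s)) = f (lo u) + g (hi u) - f s).
{ intros u. unfold lo, hi. destruct (Rle_dec u s). rewrite Hfg. ring. ring. }
assert (Hsl : fsum m (fun k => lo (b k) - lo (a k)) <= fsum m (fun k => b k - a k)).
{ apply fsum_le; intros k Hk. apply lo_lip. apply (Ha k Hk). }
assert (Shi : fsum m (fun k => hi (b k) - hi (a k)) <= fsum m (fun k => b k - a k)).
{ apply fsum_le; intros k Hk. apply hi_lip. apply (Ha k Hk). }
specialize (H1 m (fun k => lo (a k)) (fun k => lo (b k))).
specialize (H2 m (fun k => hi (a k)) (fun k => hi (b k))).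
assert (A1 : fsum m (fun k => Rabs (f (lo (b k)) - f (lo (a k)))) < e / 2).
{ apply H1. intros k Hk. destruct (Ha k Hk) as [[Ha1 Ha2] Hb1]. split. split.
  unfold lo; destruct (Rle_dec (a k) s); lra. apply lo_mono; auto. unfold lo; destruct (Rle_dec (b k) s); lra.
  intros k Hk. apply lo_mono. apply Hb; auto. lra. }
assert (A2 : fsum m (fun k => Rabs (g (hi (b k)) - g (hi (a k)))) < e / 2).
{ apply H2. intros k Hk. destruct (Ha k Hk) as [[Ha1 Ha2] Hb1]. split. split.
  unfold hi; destruct (Rle_dec (a k) s); lra. apply hi_mono; auto. unfold hi; destruct (Rle_dec (b k) s); lra.
  intros k Hk. apply hi_mono. apply Hb; auto. lra. }
eapply Rle_lt_trans. apply (fsum_le _ _ (fun k => Rabs (f (lo (b k)) - f (lo (a k))) + Rabs (g (hi (b k)) - g (hi (a k))))).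
intros k _. rewrite !Hh. replace (f (lo (b k)) + g (hi (b k)) - f s - (f (lo (a k)) + g (hi (a k)) - f s))
 with ((f (lo (b k)) - f (lo (a k))) + (g (hi (b k)) - g (hi (a k)))) by ring. apply Rabs_triang.
rewrite fsum_plus. lra. Qed.
End Glue.

Lemma dlim_local f g x l : derivable_pt_lim f x l -> (exists d, 0 < d /\ forall y, Rabs (y - x) < d -> f y = g y) ->
  derivable_pt_lim g x l.
Proof. intros Hf [d [Hd Hfg]] e He. destruct (Hf e He) as [dl Hdl].
assert (Hm : 0 < Rmin dl d) by (apply Rmin_glb_lt; auto; apply cond_pos).
exists (mkposreal _ Hm). intros h Hh Hh2. simpl in Hh2. pose proof (Rmin_l dl d). pose proof (Rmin_r dl d).
rewrite <- (Hfg (x + h)), <- (Hfg x). apply Hdl; auto. lra.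
rewrite Rminus_diag, Rabs_R0; auto. replace (x + h - x) with h by ring. lra. Qed.

Lemma dlim_shift f s u l : derivable_pt_lim f (u - s) l -> derivable_pt_lim (fun v => f (v - s)) u l.
Proof. intros H e He. destruct (H e He) as [d Hd]. exists d. intros h Hh Hh2.
replace (u + h - s) with (u - s + h) by ring. apply Hd; auto. Qed.

Lemma dlim_mulc f u l c : derivable_pt_lim f u l -> derivable_pt_lim (fun v => f v * c) u (l * c).
Proof. intros H. pose proof (derivable_pt_lim_scal f c u l H).
replace (fun v => f v * c) with (mult_real_fct c f). replace (l * c) with (c * l) by ring. auto.
apply functional_extensionality. intros; unfold mult_real_fct; ring. Qed.

Lemma dlim_fsum m (F : nat -> R -> R) u (l : nat -> R) : (forall k, (k < m)%nat -> derivable_pt_lim (F k) u (l k)) ->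
  derivable_pt_lim (fun v => fsum m (fun k => F k v)) u (fsum m l).
Proof. induction m; intros H. simpl. exact (derivable_pt_lim_const 0 u).
simpl. apply (derivable_pt_lim_plus (fun v => fsum m (fun k => F k v)) (F m)).
apply IHm; intros; apply H; lia. apply H; lia. Qed.

Lemma cont_comp n M t s D B : 0 <= t -> 0 <= s -> cont_S n M t D -> cont_S n M s B -> cont_S n M (t + s) (mmul n D B).
Proof. intros Ht Hs HD HB.
destruct HD as (sg2 & P2 & HM2 & Hm2 & HP2 & H02 & Hac2 & (N2 & HN2 & Hd2) & ->).
destruct HB as (sg1 & P1 & HM1 & Hm1 & HP1 & H01 & Hac1 & (N1 & HN1 & Hd1) & ->).
exists (fun u => if Rle_dec u s then sg1 u else sg2 (u - s)),
       (fun u => if Rle_dec u s then P1 u else mmul n (P2 (u - s)) (P1 s)).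
split; [|split; [|split; [|split; [|split; [|split]]]]].
- intros u Hu. destruct (Rle_dec u s). apply HM1; lra. apply HM2; lra.
- intros i j c Hi Hj.
  apply (meas_ext (fun u => (0 <= u <= s /\ sg1 u i j < c) \/ ((0 <= u - s <= t /\ sg2 (u - s) i j < c) /\ ~ (u = s)))).
  + intros u. destruct (Rle_dec u s); split.
    * intros [H|[[H1 H2] H3]]; [split; [lra|tauto]|lra].
    * intros [H1 H2]. left. split; [lra|auto].
    * intros [H|[[H1 H2] H3]]; [lra|split; [lra|auto]].
    * intros [H1 H2]. right. split; [split; [lra|auto]|lra].
  + apply meas_union. apply Hm1; auto. apply meas_inter.
    apply (meas_shift (fun v => 0 <= v <= t /\ sg2 v i j < c)). apply Hm2; auto.
    apply meas_compl. apply meas_null. apply outer_point.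
- intros u. destruct (Rle_dec u s). auto. apply mmul_isMat.
- destruct (Rle_dec 0 s); [auto|lra].
- intros i j Hi Hj. rewrite Rplus_comm.
  apply (ac_ext _ (fun u => if Rle_dec u s then P1 u i j else (fun v => mmul n (P2 v) (P1 s) i j) (u - s))).
  intros u. destruct (Rle_dec u s); auto.
  apply (ac_glue s t (fun u => P1 u i j) (fun v => mmul n (P2 v) (P1 s) i j) Hs Ht); auto.
  + apply (ac_ext _ (fun v => fsum n (fun k => P2 v i k * P1 s k j))).
    intros v. unfold mmul. destruct (Nat.ltb_spec i n); destruct (Nat.ltb_spec j n); try lia. auto.
    apply (ac_fsum t n (fun k v => P2 v i k * P1 s k j)). intros k Hk. apply ac_mulc. apply Hac2; auto.
  + rewrite H02. rewrite mid_l; auto.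
- exists (fun u => N1 u \/ N2 (u - s) \/ u = s). split.
  + apply null_union; auto. apply null_union. apply (outer_shift N2); auto. apply outer_point.
  + intros u Hu HnN i j Hi Hj.
    assert (Hus : u < s \/ s < u). { destruct (Rtotal_order u s) as [H|[H|H]]; auto. exfalso; apply HnN; auto. }
    destruct Hus as [Hus|Hus].
    * destruct (Rle_dec u s); [|lra].
      apply (dlim_local (fun v => P1 v i j)). apply Hd1; auto. lra.
      exists (s - u). split. lra. intros y Hy. destruct (Rle_dec y s); auto. apply Rabs_def2 in Hy. lra.
    * destruct (Rle_dec u s); [lra|].
      apply (dlim_local (fun v => fsum n (fun k => P2 (v - s) i k * P1 s k j))).
      2:{ exists (u - s). split. lra. intros y Hy. apply Rabs_def2 in Hy. destruct (Rle_dec y s); [lra|].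
          unfold mmul. destruct (Nat.ltb_spec i n); destruct (Nat.ltb_spec j n); try lia. auto. }
      replace (mmul n (sg2 (u - s)) (mmul n (P2 (u - s)) (P1 s)) i j) with
        (fsum n (fun k => mmul n (sg2 (u - s)) (P2 (u - s)) i k * P1 s k j)).
      apply (dlim_fsum n (fun k v => P2 (v - s) i k * P1 s k j) u). intros k Hk.
      apply dlim_mulc. apply (dlim_shift (fun v => P2 v i k)). apply Hd2; auto. lra.
      rewrite <- mmul_assoc. unfold mmul at 2. destruct (Nat.ltb_spec i n); destruct (Nat.ltb_spec j n); try lia. auto.
- destruct (Rle_dec (t + s) s).
  + assert (t = 0) by lra. subst. rewrite H02, mid_l; auto. rewrite Rplus_0_l. auto.
  + replace (t + s - s) with t by ring. auto. Qed.

Lemma cont_case n M Tm Sg : (forall t, Tm t <-> 0 <= t) -> (forall t B, Sg t B <-> 0 <= t /\ cont_S n M t B) ->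
  (forall t, Tm t -> 0 <= t) /\ (forall T, exists t, Tm t /\ T <= t) /\ SGprop n Tm Sg.
Proof. intros HT HS. split; [|split].
- intros t Ht. apply HT; auto.
- intros T. exists (Rmax T 0). split. apply HT. apply Rmax_r. apply Rmax_l.
- intros t s D B Ht Hs HD HB. apply HT in Ht, Hs. apply HS in HD, HB. split. apply HT. lra.
  exists (fun _ => mmul n D B). split. intros _. apply HS. split. lra. apply cont_comp; tauto.
  intros; apply Un_cv_const. Qed.

Theorem mainTheorem6 (n : nat) (K : Vec -> Prop) (Tm : R -> Prop) (S : R -> Mat -> Prop) :
  proper_cone n K ->
  generated_semigroup n Tm S ->
  (forall t B, Tm t -> S t B -> in_pi n K B) ->
  K_irreducible_sg n K Tm S ->
  jsr_eq n Tm S 1 ->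
  sg_bounded n Tm S.
Proof. intros HK Hgen Hpi Hirr Hjsr.
destruct Hgen as [(M & _ & HT & HS)|[(M & _ & HT & HS)|(M & _ & _ & HT & HS)]].
- destruct (disc_case n M Tm S HT HS) as (H1 & H2 & H3). apply core_thm with K; auto.
- destruct (cont_case n M Tm S HT HS) as (H1 & H2 & H3). apply core_thm with K; auto.
- destruct (jump_case n M Tm S HT HS) as (H1 & H2 & H3). apply core_thm with K; auto.
Qed.
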